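(* All framed hyperbolic $3$-manifolds $(\mathbb{H}^3/\Gamma,f)\in\mathcal{H}$ such that $\Omega(\Gamma)\ne\varnothing$ lie in the same path component of $\mathcal{H}$ (namely that of $(\mathbb{H}^3,\mathcal{O}_O)$).
   Context: A Kleinian group is a discrete torsion-free subgroup $\Gamma\le\mathrm{PSL}_2\mathbb{C}$; its limit set $\Lambda(\Gamma)$ is $\overline{\Gamma\cdot x}\cap S^2_\infty$ for any $x\in\mathbb{H}^3$, and $\Omega(\Gamma)=S^2_\infty\setminus\Lambda(\Gamma)$ is its domain of discontinuity. $\mathcal{H}$ is the set of framed hyperbolic $3$-manifolds $(M,f)$ ($f$ a positively oriented orthonormal frame) modulo frame-preserving orientation-preserving isometry, with the geometric topology, i.e. the Chabauty topology transported via the bijection $\Gamma\mapsto(\mathbb{H}^3/\Gamma,\pi_\Gamma(\mathcal{O}_O))$, where $\mathcal{O}_O$ is a fixed frame of $\mathbb{H}^3$ at a fixed point $O$ ($\Gamma_n\to\Gamma$ iff accumulation points of sequences $\psi_n\in\Gamma_n$ lie in $\Gamma$ and every element of $\Gamma$ is a limit of some $\psi_n\in\Gamma_n$). *)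

(* Defs.v *)
From Stdlib Require Import Reals.
From Coquelicot Require Import Coquelicot.
Open Scope R_scope.

(** A subgroup of PSL_2(C) is represented by its
    preimage in SL_2(C): a predicate on matrices closed under products,
    inverses, and A |-> -A. *)
Record M2 := mkM2 { ma : C; mb : C; mc : C; md : C }.

Definition mdet (A : M2) : C := Cminus (Cmult (ma A) (md A)) (Cmult (mb A) (mc A)).
Definition SL2 (A : M2) : Prop := mdet A = RtoC 1.

Definition mmul (A B : M2) : M2 :=
  mkM2 (Cplus (Cmult (ma A) (ma B)) (Cmult (mb A) (mc B)))
       (Cplus (Cmult (ma A) (mb B)) (Cmult (mb A) (md B)))
       (Cplus (Cmult (mc A) (ma B)) (Cmult (md A) (mc B)))
       (Cplus (Cmult (mc A) (mb B)) (Cmult (md A) (md B))).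
Definition mneg (A : M2) : M2 := mkM2 (Copp (ma A)) (Copp (mb A)) (Copp (mc A)) (Copp (md A)).
(* inverse of a determinant-one matrix *)
Definition minv (A : M2) : M2 := mkM2 (md A) (Copp (mb A)) (Copp (mc A)) (ma A).
Definition mid : M2 := mkM2 (RtoC 1) (RtoC 0) (RtoC 0) (RtoC 1).
Fixpoint mpow (A : M2) (n : nat) : M2 :=
  match n with O => mid | S k => mmul A (mpow A k) end.

Definition psl_is_id (A : M2) : Prop := A = mid \/ A = mneg mid.

Definition mnorm (A : M2) : R := Cmod (ma A) + Cmod (mb A) + Cmod (mc A) + Cmod (md A).
Definition msub (A B : M2) : M2 :=
  mkM2 (Cminus (ma A) (ma B)) (Cminus (mb A) (mb B)) (Cminus (mc A) (mc B)) (Cminus (md A) (md B)).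
Definition psl_dist (A B : M2) : R := Rmin (mnorm (msub A B)) (mnorm (msub A (mneg B))).

Definition psl_conv (u : nat -> M2) (A : M2) : Prop :=
  is_lim_seq (fun n => psl_dist (u n) A) 0.

Definition is_psl_subgroup (G : M2 -> Prop) : Prop :=
  (forall A, G A -> SL2 A) /\ G mid /\
  (forall A B, G A -> G B -> G (mmul A B)) /\
  (forall A, G A -> G (minv A)) /\
  (forall A, G A -> G (mneg A)).

Definition discrete (G : M2 -> Prop) : Prop :=
  forall A, G A -> exists eps, 0 < eps /\
    forall B, G B -> psl_dist A B < eps -> psl_dist A B = 0.

Definition torsion_free (G : M2 -> Prop) : Prop :=
  forall A n, G A -> (1 <= n)%nat -> psl_is_id (mpow A n) -> psl_is_id A.

Definition kleinian (G : M2 -> Prop) : Prop :=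
  is_psl_subgroup G /\ discrete G /\ torsion_free G.

Definition trivial_group : M2 -> Prop := psl_is_id.

(** Upper half-space model of H^3: points (z,t), z in C, t > 0, i.e. z + t j.
    Action g.(z + t j) = (a w + b)(c w + d)^{-1} (quaternions):
    D = |cz+d|^2 + |c|^2 t^2,
    z' = ((az+b) conj(cz+d) + a conj(c) t^2)/D,  t' = t/D. *)
Definition H3pt := (C * R)%type.
Definition act (g : M2) (p : H3pt) : H3pt :=
  let z := fst p in let t := snd p in
  let czd := Cplus (Cmult (mc g) z) (md g) in
  let D := (Cmod czd)^2 + (Cmod (mc g))^2 * t^2 in
  (Cmult (Cplus (Cmult (Cplus (Cmult (ma g) z) (mb g)) (Cconj czd))
                (Cmult (Cmult (ma g) (Cconj (mc g))) (RtoC (t^2))))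
         (RtoC (/ D)),
   t / D).

(** the fixed base point O = j = (0,1) *)
Definition Opt : H3pt := (RtoC 0, 1).

(** sphere at infinity = C ∪ {∞} = option C (None = ∞); convergence of points
    of H^3 to a boundary point in the compactification H^3 ∪ S^2_∞. *)
Definition conv_to_boundary (p : nat -> H3pt) (xi : option C) : Prop :=
  match xi with
  | Some z0 => is_lim_seq (fun n => Cmod (Cminus (fst (p n)) z0)) 0 /\
               is_lim_seq (fun n => snd (p n)) 0
  | None => is_lim_seq (fun n => (Cmod (fst (p n)))^2 + (snd (p n))^2) p_infty
  end.

Definition limit_set (G : M2 -> Prop) (xi : option C) : Prop :=
  exists g : nat -> M2, (forall n, G (g n)) /\
    conv_to_boundary (fun n => act (g n) Opt) xi.

Definition domain_nonempty (G : M2 -> Prop) : Prop :=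
  exists xi : option C, ~ limit_set G xi.

Definition geom_conv (Gs : nat -> M2 -> Prop) (G : M2 -> Prop) : Prop :=
  (forall (phi : nat -> nat) (psi : nat -> M2) (A : M2),
      (forall k, (phi k < phi (S k))%nat) ->
      (forall k, Gs (phi k) (psi k)) ->
      psl_conv psi A -> G A) /\
  (forall A, G A -> exists psi : nat -> M2,
      (forall n, Gs n (psi n)) /\ psl_conv psi A).

(** G lies in the path component of H containing the trivial group
    (i.e. (H^3, O_O)): there is a continuous path [0,1] -> H from it to G. *)
Definition in_trivial_path_component (G : M2 -> Prop) : Prop :=
  exists gamma : R -> (M2 -> Prop),
    (forall s, 0 <= s <= 1 -> kleinian (gamma s)) /\
    (forall A, gamma 0 A <-> trivial_group A) /\
    (forall A, gamma 1 A <-> G A) /\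
    (forall s (u : nat -> R), 0 <= s <= 1 -> (forall n, 0 <= u n <= 1) ->
        is_lim_seq u s -> geom_conv (fun n => gamma (u n)) (gamma s)).

(* Main.v *)
Require Import Defs.
From Stdlib Require Import Reals.
From Coquelicot Require Import Coquelicot.
From Stdlib Require Import Lra Lia Psatz ClassicalEpsilon Classical FunctionalExtensionality PropExtensionality.
Open Scope R_scope.

Definition madd (A B : M2) : M2 :=
  mkM2 (Cplus (ma A) (ma B)) (Cplus (mb A) (mb B)) (Cplus (mc A) (mc B)) (Cplus (md A) (md B)).
Ltac mdes := repeat match goal with
  | A : M2 |- _ => destruct A as [?a ?b ?c ?d]
  end.

Ltac mring := mdes; unfold madd, mmul, mneg, minv, mid, msub, mdet in *; simpl in *;
   try (f_equal; ring).
Ltac cring := mdes; unfold mmul, mneg, minv, mid, msub, mdet in *; simpl in *; ring.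

Lemma mmul_assoc A B C0 : mmul A (mmul B C0) = mmul (mmul A B) C0.
Proof. mring. Qed.
Lemma mmul_mid_l A : mmul mid A = A.
Proof. mring. Qed.
Lemma mmul_mid_r A : mmul A mid = A.
Proof. mring. Qed.
Lemma mdet_mul A B : mdet (mmul A B) = Cmult (mdet A) (mdet B).
Proof. cring. Qed.
Lemma minv_l A : SL2 A -> mmul (minv A) A = mid.
Proof. unfold SL2. mring. intro H. f_equal.
  - rewrite <- H. ring.
  - ring.
  - ring.
  - rewrite <- H. ring. Qed.
Lemma minv_r A : SL2 A -> mmul A (minv A) = mid.
Proof. unfold SL2. mring. intro H. f_equal.
  - rewrite <- H. ring.
  - ring.
  - ring.
  - rewrite <- H. ring. Qed.
Lemma minv_mul A B : minv (mmul A B) = mmul (minv B) (minv A).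
Proof. mring. Qed.
Lemma minv_minv A : minv (minv A) = A.
Proof. mring. Qed.
Lemma mdet_minv A : mdet (minv A) = mdet A.
Proof. cring. Qed.
Lemma mneg_mul_l A B : mmul (mneg A) B = mneg (mmul A B).
Proof. mring. Qed.
Lemma mneg_mul_r A B : mmul A (mneg B) = mneg (mmul A B).
Proof. mring. Qed.
Lemma mneg_mneg A : mneg (mneg A) = A.
Proof. mring. Qed.
Lemma minv_mneg A : minv (mneg A) = mneg (minv A).
Proof. mring. Qed.
Lemma mdet_mneg A : mdet (mneg A) = mdet A.
Proof. cring. Qed.
Lemma minv_mid : minv mid = mid.
Proof. unfold minv, mid; simpl. f_equal; ring. Qed.
Lemma SL2_mid : SL2 mid.
Proof. unfold SL2, mdet, mid; simpl. ring. Qed.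
Lemma SL2_mul A B : SL2 A -> SL2 B -> SL2 (mmul A B).
Proof. unfold SL2; intros; rewrite mdet_mul, H, H0; ring. Qed.
Lemma SL2_minv A : SL2 A -> SL2 (minv A).
Proof. unfold SL2; intros; rewrite mdet_minv; auto. Qed.
Lemma SL2_mneg A : SL2 A -> SL2 (mneg A).
Proof. unfold SL2; intros; rewrite mdet_mneg; auto. Qed.

Lemma mnorm_ge0 A : 0 <= mnorm A.
Proof. unfold mnorm. pose proof (Cmod_ge_0 (ma A)). pose proof (Cmod_ge_0 (mb A)).
  pose proof (Cmod_ge_0 (mc A)). pose proof (Cmod_ge_0 (md A)). lra. Qed.

Lemma mnorm_add A B : mnorm (madd A B) <= mnorm A + mnorm B.
Proof. unfold mnorm, madd; simpl.
  pose proof (Cmod_triangle (ma A) (ma B)). pose proof (Cmod_triangle (mb A) (mb B)).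
  pose proof (Cmod_triangle (mc A) (mc B)). pose proof (Cmod_triangle (md A) (md B)). lra. Qed.

Lemma Cmod_sum2 x y z w : Cmod (Cplus (Cmult x y) (Cmult z w)) <= Cmod x * Cmod y + Cmod z * Cmod w.
Proof. eapply Rle_trans. apply Cmod_triangle. rewrite !Cmod_mult. lra. Qed.

Lemma mnorm_mul A B : mnorm (mmul A B) <= mnorm A * mnorm B.
Proof. destruct A as [a b c d], B as [a' b' c' d']. unfold mnorm, mmul; simpl.
  pose proof (Cmod_sum2 a a' b c'). pose proof (Cmod_sum2 a b' b d').
  pose proof (Cmod_sum2 c a' d c'). pose proof (Cmod_sum2 c b' d d').
  pose proof (Cmod_ge_0 a). pose proof (Cmod_ge_0 b). pose proof (Cmod_ge_0 c). pose proof (Cmod_ge_0 d).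
  pose proof (Cmod_ge_0 a'). pose proof (Cmod_ge_0 b'). pose proof (Cmod_ge_0 c'). pose proof (Cmod_ge_0 d').
  nra. Qed.

Lemma msub_madd A B C0 : msub A C0 = madd (msub A B) (msub B C0).
Proof. mring. Qed.

Lemma mnorm_tri A B C0 : mnorm (msub A C0) <= mnorm (msub A B) + mnorm (msub B C0).
Proof. rewrite (msub_madd A B C0). apply mnorm_add. Qed.

Lemma mnorm_opp A : mnorm (mneg A) = mnorm A.
Proof. unfold mnorm, mneg; simpl. rewrite !Cmod_opp. auto. Qed.

Lemma msub_sym A B : msub B A = mneg (msub A B).
Proof. mring. Qed.

Lemma mnorm_sub_sym A B : mnorm (msub A B) = mnorm (msub B A).
Proof. rewrite (msub_sym B A), mnorm_opp. auto. Qed.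

Lemma mnorm_minv A : mnorm (minv A) = mnorm A.
Proof. unfold mnorm, minv; simpl. rewrite !Cmod_opp. lra. Qed.

Lemma msub_minv A B : msub (minv A) (minv B) = minv (msub A B).
Proof. mring. Qed.

Lemma msub_mneg A B : msub (mneg A) (mneg B) = mneg (msub A B).
Proof. mring. Qed.

Lemma msub_zero A : msub A (mkM2 (RtoC 0) (RtoC 0) (RtoC 0) (RtoC 0)) = A.
Proof. mring. Qed.

Lemma mnorm_bound_sub A B : mnorm A <= mnorm (msub A B) + mnorm B.
Proof. pose proof (mnorm_tri A B (mkM2 (RtoC 0) (RtoC 0) (RtoC 0) (RtoC 0))).
  rewrite !msub_zero in H. auto. Qed.

Lemma msub_mul A B A' B' :
  msub (mmul A B) (mmul A' B') = madd (mmul (msub A A') B) (mmul A' (msub B B')).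
Proof. mring. Qed.

Lemma mnorm_mul_sub A B A' B' :
  mnorm (msub (mmul A B) (mmul A' B')) <=
  mnorm (msub A A') * mnorm B + mnorm A' * mnorm (msub B B').
Proof. rewrite msub_mul. eapply Rle_trans. apply mnorm_add.
  pose proof (mnorm_mul (msub A A') B). pose proof (mnorm_mul A' (msub B B')). lra. Qed.

Lemma Cminus_eq0 x y : Cminus x y = RtoC 0 -> x = y.
Proof. intro H. replace x with (Cplus (Cminus x y) y) by ring. rewrite H. ring. Qed.

Lemma mnorm0 A B : mnorm (msub A B) = 0 -> A = B.
Proof. destruct A as [a b c d], B as [a' b' c' d']. unfold mnorm, msub; simpl. intro H.
  pose proof (Cmod_ge_0 (Cminus a a')). pose proof (Cmod_ge_0 (Cminus b b')).
  pose proof (Cmod_ge_0 (Cminus c c')). pose proof (Cmod_ge_0 (Cminus d d')).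
  f_equal; apply Cminus_eq0; apply Cmod_eq_0; lra. Qed.

Lemma msub_self A : mnorm (msub A A) = 0.
Proof. replace (msub A A) with (mkM2 (RtoC 0) (RtoC 0) (RtoC 0) (RtoC 0)) by mring.
  unfold mnorm; simpl. rewrite Cmod_0. lra. Qed.

Lemma psl_dist_ge0 A B : 0 <= psl_dist A B.
Proof. unfold psl_dist. apply Rmin_glb; apply mnorm_ge0. Qed.

Lemma psl_dist0 A B : psl_dist A B = 0 -> A = B \/ A = mneg B.
Proof. unfold psl_dist. intro H. destruct (Rle_dec (mnorm (msub A B)) (mnorm (msub A (mneg B)))) as [e|e]; [rewrite Rmin_left in H by lra|rewrite Rmin_right in H by lra];
  [left|right]; apply mnorm0; auto. Qed.

Lemma psl_dist_eq A : psl_dist A A = 0.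
Proof. unfold psl_dist. rewrite msub_self. pose proof (mnorm_ge0 (msub A (mneg A))).
  apply Rle_antisym. apply Rmin_l. apply Rmin_glb; lra. Qed.

Lemma psl_dist_neg A : psl_dist A (mneg A) = 0.
Proof. unfold psl_dist. rewrite mneg_mneg, msub_self. pose proof (mnorm_ge0 (msub A (mneg A))).
  apply Rle_antisym. apply Rmin_r. apply Rmin_glb; lra. Qed.

Lemma psl_dist_pm A B : A = B \/ A = mneg B -> psl_dist A B = 0.
Proof. intros [->| ->]. apply psl_dist_eq. unfold psl_dist. rewrite msub_self.
  pose proof (mnorm_ge0 (msub (mneg B) B)). apply Rle_antisym. apply Rmin_r. apply Rmin_glb; lra. Qed.

Definition cz (u : nat -> R) : Prop :=
  forall eps, 0 < eps -> exists N, forall n, (N <= n)%nat -> Rabs (u n) < eps.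

Lemma cz_lim u : cz u <-> is_lim_seq u 0.
Proof. rewrite <- is_lim_seq_spec. unfold is_lim_seq', cz. split.
  - intros H eps. destruct (H eps (cond_pos eps)) as [N HN]. exists N. intros n Hn.
    rewrite Rminus_0_r. auto.
  - intros H eps Heps. destruct (H (mkposreal eps Heps)) as [N HN]. exists N. intros n Hn.
    specialize (HN n Hn). rewrite Rminus_0_r in HN. auto. Qed.

Lemma cz_le u v : (forall n, Rabs (u n) <= v n) -> cz v -> cz u.
Proof. intros H Hv eps He. destruct (Hv eps He) as [N HN]. exists N. intros n Hn.
  specialize (HN n Hn). specialize (H n). eapply Rle_lt_trans. apply H.
  eapply Rle_lt_trans. apply Rle_abs. auto. Qed.

Lemma cz_le_ev u v : (exists N0, forall n, (N0 <= n)%nat -> Rabs (u n) <= v n) -> cz v -> cz u.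
Proof. intros [N0 H] Hv eps He. destruct (Hv eps He) as [N HN]. exists (max N N0). intros n Hn.
  specialize (HN n ltac:(lia)). specialize (H n ltac:(lia)). eapply Rle_lt_trans. apply H.
  eapply Rle_lt_trans. apply Rle_abs. auto. Qed.

Lemma cz_plus u v : cz u -> cz v -> cz (fun n => u n + v n).
Proof. intros Hu Hv eps He. destruct (Hu (eps/2) ltac:(lra)) as [N1 H1].
  destruct (Hv (eps/2) ltac:(lra)) as [N2 H2]. exists (max N1 N2). intros n Hn.
  specialize (H1 n ltac:(lia)). specialize (H2 n ltac:(lia)).
  eapply Rle_lt_trans. apply Rabs_triang. lra. Qed.

Lemma cz_scal k u : cz u -> cz (fun n => k * u n).
Proof. intros Hu eps He. destruct (Hu (eps / (Rabs k + 1))) as [N HN].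
  { apply Rdiv_lt_0_compat; auto. pose proof (Rabs_pos k); lra. }
  exists N. intros n Hn. specialize (HN n Hn). rewrite Rabs_mult.
  pose proof (Rabs_pos k). pose proof (Rabs_pos (u n)).
  apply Rle_lt_trans with ((Rabs k + 1) * Rabs (u n)). nra.
  apply Rmult_lt_reg_l with (/ (Rabs k + 1)). apply Rinv_0_lt_compat; lra.
  rewrite <- Rmult_assoc, Rinv_l by lra. unfold Rdiv in HN. lra. Qed.

Lemma cz_const0 : cz (fun _ => 0).
Proof. intros eps He. exists O. intros. rewrite Rabs_R0. auto. Qed.

Lemma cz_mult u v : cz u -> cz v -> cz (fun n => u n * v n).
Proof. intros Hu Hv eps He. destruct (Hu 1 ltac:(lra)) as [N1 H1].
  destruct (Hv eps He) as [N2 H2]. exists (max N1 N2). intros n Hn.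
  specialize (H1 n ltac:(lia)). specialize (H2 n ltac:(lia)). rewrite Rabs_mult.
  pose proof (Rabs_pos (u n)). pose proof (Rabs_pos (v n)). nra. Qed.

Lemma cz_bmult u v K : (forall n, Rabs (u n) <= K) -> cz v -> cz (fun n => u n * v n).
Proof. intros Hu Hv. apply cz_le with (fun n => K * Rabs (v n)).
  - intro n. rewrite Rabs_mult. specialize (Hu n). pose proof (Rabs_pos (u n)).
    pose proof (Rabs_pos (v n)). nra.
  - apply cz_scal. intros eps He. destruct (Hv eps He) as [N HN]. exists N. intros.
    rewrite Rabs_Rabsolu. auto. Qed.

Lemma cz_subseq u (phi : nat -> nat) : (forall n, (n <= phi n)%nat) -> cz u -> cz (fun n => u (phi n)).
Proof. intros Hp Hu eps He. destruct (Hu eps He) as [N HN]. exists N. intros n Hn.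
  apply HN. specialize (Hp n). lia. Qed.

Definition mconv (X : nat -> M2) (L : M2) : Prop := cz (fun n => mnorm (msub (X n) L)).

Lemma fin_bound (u : nat -> R) N : exists K, forall n, (n < N)%nat -> Rabs (u n) <= K.
Proof. induction N as [|N [K HK]].
  - exists 0. intros; lia.
  - exists (Rmax K (Rabs (u N))). intros n Hn. destruct (Nat.eq_dec n N) as [->|].
    + apply Rmax_r.
    + eapply Rle_trans. apply HK. lia. apply Rmax_l. Qed.

Lemma cz_bounded u : cz u -> exists K, forall n, Rabs (u n) <= K.
Proof. intros Hu. destruct (Hu 1 ltac:(lra)) as [N HN]. destruct (fin_bound u N) as [K HK].
  exists (Rmax K 1). intros n. destruct (Compare_dec.le_lt_dec N n).
  - left. eapply Rlt_le_trans. apply HN; auto. apply Rmax_r.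
  - eapply Rle_trans. apply HK; auto. apply Rmax_l. Qed.

Lemma mconv_const A : mconv (fun _ => A) A.
Proof. unfold mconv. eapply cz_le. 2: apply cz_const0. intro n. rewrite msub_self, Rabs_R0. lra. Qed.

Lemma mconv_bounded X L : mconv X L -> exists K, forall n, mnorm (X n) <= K.
Proof. intro H. destruct (cz_bounded _ H) as [K HK]. exists (K + mnorm L). intro n.
  specialize (HK n). rewrite Rabs_pos_eq in HK by apply mnorm_ge0.
  pose proof (mnorm_bound_sub (X n) L). lra. Qed.

Lemma mconv_mul X A Y B : mconv X A -> mconv Y B -> mconv (fun n => mmul (X n) (Y n)) (mmul A B).
Proof. intros HX HY. unfold mconv. destruct (mconv_bounded Y B HY) as [K HK].
  apply cz_le with (fun n => K * mnorm (msub (X n) A) + mnorm A * mnorm (msub (Y n) B)).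
  - intro n. rewrite Rabs_pos_eq by apply mnorm_ge0. eapply Rle_trans. apply mnorm_mul_sub.
    pose proof (HK n). pose proof (mnorm_ge0 (msub (X n) A)).
    pose proof (mnorm_ge0 A). nra.
  - apply cz_plus; apply cz_scal; auto.
Qed.

Lemma mconv_minv X A : mconv X A -> mconv (fun n => minv (X n)) (minv A).
Proof. unfold mconv. intro H. eapply cz_le. 2: apply H. intro n. rewrite msub_minv, mnorm_minv.
  rewrite Rabs_pos_eq by apply mnorm_ge0. lra. Qed.

Lemma mconv_mneg X A : mconv X A -> mconv (fun n => mneg (X n)) (mneg A).
Proof. unfold mconv. intro H. eapply cz_le. 2: apply H. intro n. rewrite msub_mneg, mnorm_opp.
  rewrite Rabs_pos_eq by apply mnorm_ge0. lra. Qed.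

Lemma mconv_subseq X A (phi : nat -> nat) : (forall n, (n <= phi n)%nat) -> mconv X A -> mconv (fun n => X (phi n)) A.
Proof. unfold mconv. intros. apply (cz_subseq (fun n => mnorm (msub (X n) A))); auto. Qed.

Lemma psl_dist_le_mnorm A B : psl_dist A B <= mnorm (msub A B).
Proof. apply Rmin_l. Qed.

Lemma mconv_psl X A : mconv X A -> psl_conv X A.
Proof. unfold psl_conv. intro H. apply cz_lim. eapply cz_le. 2: apply H. intro n.
  rewrite Rabs_pos_eq by apply psl_dist_ge0. apply psl_dist_le_mnorm. Qed.

Lemma psl_conv_fix psi A : psl_conv psi A ->
  exists psi', (forall n, psi' n = psi n \/ psi' n = mneg (psi n)) /\ mconv psi' A.
Proof. unfold psl_conv. intro H. apply cz_lim in H.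
  exists (fun n => if Rle_dec (mnorm (msub (psi n) A)) (mnorm (msub (psi n) (mneg A)))
                  then psi n else mneg (psi n)). split.
  - intro n. destruct Rle_dec; auto.
  - unfold mconv. eapply cz_le. 2: apply H. intro n.
    unfold psl_dist. destruct Rle_dec.
    + rewrite Rmin_left by auto. rewrite Rabs_pos_eq by apply mnorm_ge0. lra.
    + rewrite Rmin_right by lra. rewrite Rabs_pos_eq by apply mnorm_ge0.
      replace (msub (mneg (psi n)) A) with (mneg (msub (psi n) (mneg A))) by mring.
      rewrite mnorm_opp. lra. Qed.

Lemma pm_limit X L Y N : mconv X L -> (forall k, (N <= k)%nat -> X k = Y \/ X k = mneg Y) ->
  L = Y \/ L = mneg Y.
Proof. intros H HN. destruct (classic (L = Y)) as [|h1]; auto. destruct (classic (L = mneg Y)) as [|h2]; auto.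
  exfalso. assert (p1 : 0 < mnorm (msub Y L)).
  { pose proof (mnorm_ge0 (msub Y L)). destruct H0; auto. symmetry in H0. apply mnorm0 in H0. congruence. }
  assert (p2 : 0 < mnorm (msub (mneg Y) L)).
  { pose proof (mnorm_ge0 (msub (mneg Y) L)). destruct H0; auto. symmetry in H0. apply mnorm0 in H0. congruence. }
  destruct (H (Rmin (mnorm (msub Y L)) (mnorm (msub (mneg Y) L)))) as [M HM].
  { apply Rmin_glb_lt; auto. }
  specialize (HM (max M N) ltac:(lia)). rewrite Rabs_pos_eq in HM by apply mnorm_ge0.
  destruct (HN (max M N) ltac:(lia)) as [e|e]; rewrite e in HM.
  - pose proof (Rmin_l (mnorm (msub Y L)) (mnorm (msub (mneg Y) L))). lra.
  - pose proof (Rmin_r (mnorm (msub Y L)) (mnorm (msub (mneg Y) L))). lra. Qed.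

Lemma msub_mul_l M Y Z : msub (mmul M Y) (mmul M Z) = mmul M (msub Y Z).
Proof. mring. Qed.

Lemma CL0 G X L : kleinian G -> (forall k, G (X k)) -> mconv X L ->
  exists N, forall k, (N <= k)%nat -> X k = X N \/ X k = mneg (X N).
Proof.
  intros [[HS [Hid [Hmul [Hinv Hneg]]]] [Hdisc Htf]] HX HL.
  destruct (mconv_bounded X L HL) as [K HK].
  set (h := fun k => mmul (minv (X k)) (X (S k))).
  assert (Hh : forall k, mnorm (msub (h k) mid) <= K * (mnorm (msub (X (S k)) L) + mnorm (msub (X k) L))).
  { intro k. unfold h. rewrite <- (minv_l (X k)) by auto. rewrite msub_mul_l.
    eapply Rle_trans. apply mnorm_mul. rewrite mnorm_minv.
    pose proof (mnorm_tri (X (S k)) L (X k)). rewrite (mnorm_sub_sym L (X k)) in H.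
    pose proof (HK k). pose proof (mnorm_ge0 (X k)). pose proof (mnorm_ge0 (msub (X (S k)) (X k))). nra. }
  destruct (Hdisc mid Hid) as [eps [Heps Hd]].
  assert (Hc : cz (fun k => K * (mnorm (msub (X (S k)) L) + mnorm (msub (X k) L)))).
  { apply cz_scal. apply cz_plus; auto. apply (cz_subseq (fun n => mnorm (msub (X n) L)) S); auto. }
  destruct (Hc eps Heps) as [N HN]. exists N.
  assert (step : forall k, (N <= k)%nat -> X (S k) = X k \/ X (S k) = mneg (X k)).
  { intros k Hk. assert (Gh : G (h k)) by (unfold h; auto).
    assert (dl : psl_dist mid (h k) < eps).
    { eapply Rle_lt_trans. apply psl_dist_le_mnorm. rewrite mnorm_sub_sym.
      eapply Rle_lt_trans. apply Hh. specialize (HN k Hk). eapply Rle_lt_trans. apply Rle_abs. auto. }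
    specialize (Hd _ Gh dl). apply psl_dist0 in Hd.
    assert (E : X (S k) = mmul (X k) (h k)).
    { unfold h. rewrite mmul_assoc, minv_r by auto. rewrite mmul_mid_l. auto. }
    destruct Hd as [e|e].
    - left. rewrite E, <- e, mmul_mid_r. auto.
    - right. rewrite E. replace (h k) with (mneg mid) by (rewrite e, mneg_mneg; auto).
      rewrite mneg_mul_r, mmul_mid_r. auto. }
  intros k Hk. replace k with (N + (k - N))%nat by lia. generalize (k - N)%nat. intro d.
  induction d as [|d IH].
  - left. f_equal. lia.
  - replace (N + S d)%nat with (S (N + d)) by lia.
    destruct (step (N + d)%nat ltac:(lia)) as [e|e]; rewrite e; destruct IH as [e'|e']; rewrite e'; auto.
    rewrite mneg_mneg; auto.
Qed.

Lemma CL G X L : kleinian G -> (forall k, G (X k)) -> mconv X L -> G L.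
Proof. intros HG HX HL. destruct (CL0 G X L HG HX HL) as [N HN].
  destruct (pm_limit X L (X N) N HL HN) as [->| ->]; auto.
  destruct HG as [[_ [_ [_ [_ Hneg]]]] _]. auto. Qed.

Definition inc (p : nat -> nat) : Prop := forall n, (p n < p (S n))%nat.

Lemma inc_ge p : inc p -> forall n, (n <= p n)%nat.
Proof. intros H n. induction n. lia. specialize (H n). lia. Qed.

Lemma inc_comp p q : inc p -> inc q -> inc (fun n => p (q n)).
Proof. intros Hp Hq n. simpl.
  assert (mono : forall a b, (a < b)%nat -> (p a < p b)%nat).
  { intros a b Hab. induction Hab. apply Hp. specialize (Hp m). lia. }
  apply mono. apply Hq. Qed.

Lemma cz_comp (u : nat -> R) p q : inc q -> cz (fun n => u (p n)) -> cz (fun n => u (p (q n))).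
Proof. intros Hq H. apply (cz_subseq (fun n => u (p n)) q); auto. apply inc_ge; auto. Qed.

Lemma small_inv eps : 0 < eps -> exists N, forall n, (N <= n)%nat -> / (INR n + 1) < eps.
Proof. intros He. destruct (INR_archimed eps 1 He) as [N HN]. exists N. intros n Hn.
  apply le_INR in Hn. pose proof (pos_INR N).
  apply Rmult_lt_reg_l with (INR n + 1). lra. rewrite Rinv_r by lra. nra. Qed.

Lemma BW1 (w : nat -> R) K : (forall n, Rabs (w n) <= K) ->
  exists phi, inc phi /\ exists l, cz (fun n => w (phi n) - l).
Proof. intros HK.
  destruct (Bolzano_Weierstrass w (fun c => -K <= c <= K) (compact_P3 (-K) K)) as [l Hl].
  { intro n. specialize (HK n). apply Rabs_le_between in HK. lra. }
  assert (sel : forall N k : nat, exists p, (N <= p)%nat /\ Rabs (w p - l) < / (INR k + 1)).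
  { intros N k. destruct (Hl (disc l (mkposreal (/ (INR k + 1)) ltac:(apply Rinv_0_lt_compat; pose proof (pos_INR k); lra))) N) as [p [Hp1 Hp2]].
    - exists (mkposreal (/ (INR k + 1)) ltac:(apply Rinv_0_lt_compat; pose proof (pos_INR k); lra)).
      intros y Hy. auto.
    - exists p. split; auto. }
  set (f := fun N k => proj1_sig (constructive_indefinite_description _ (sel N k))).
  assert (Hf : forall N k, (N <= f N k)%nat /\ Rabs (w (f N k) - l) < / (INR k + 1)).
  { intros N k. unfold f. destruct constructive_indefinite_description. simpl. auto. }
  set (phi := fix phi n := match n with O => f O O | S m => f (S (phi m)) (S m) end).
  exists phi. split.
  - intro n. simpl. destruct (Hf (S (phi n)) (S n)). lia.
  - exists l. intros eps He. destruct (small_inv eps He) as [N HN]. exists N. intros n Hn.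
    specialize (HN n Hn). destruct n as [|m].
    + simpl. destruct (Hf O O). lra.
    + simpl. destruct (Hf (S (phi m)) (S m)). lra. Qed.

Lemma Cmod_le_sum (z : C) : Cmod z <= Rabs (fst z) + Rabs (snd z).
Proof. destruct z as [x y]. unfold Cmod; simpl.
  pose proof (Rabs_pos x). pose proof (Rabs_pos y).
  rewrite <- (sqrt_pow2 (Rabs x + Rabs y)) by lra. apply sqrt_le_1_alt.
  rewrite <- (pow2_abs x), <- (pow2_abs y) at 1. nra. Qed.

Lemma Rabs_fst_le (z : C) : Rabs (fst z) <= Cmod z.
Proof. destruct z as [x y]. unfold Cmod; simpl. rewrite <- sqrt_Rsqr_abs. apply sqrt_le_1_alt.
  unfold Rsqr. nra. Qed.
Lemma Rabs_snd_le (z : C) : Rabs (snd z) <= Cmod z.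
Proof. destruct z as [x y]. unfold Cmod; simpl. rewrite <- sqrt_Rsqr_abs. apply sqrt_le_1_alt.
  unfold Rsqr. nra. Qed.

Lemma BWC (z : nat -> C) K : (forall n, Cmod (z n) <= K) ->
  exists phi, inc phi /\ exists l, cz (fun n => Cmod (Cminus (z (phi n)) l)).
Proof. intros HK.
  destruct (BW1 (fun n => fst (z n)) K) as [p1 [i1 [l1 c1]]].
  { intro n. eapply Rle_trans. apply Rabs_fst_le. auto. }
  destruct (BW1 (fun n => snd (z (p1 n))) K) as [p2 [i2 [l2 c2]]].
  { intro n. eapply Rle_trans. apply Rabs_snd_le. auto. }
  exists (fun n => p1 (p2 n)). split. apply inc_comp; auto.
  exists (l1, l2). apply cz_le with (fun n => Rabs (fst (z (p1 (p2 n))) - l1) + Rabs (snd (z (p1 (p2 n))) - l2)).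
  - intro n. rewrite Rabs_pos_eq by apply Cmod_ge_0. eapply Rle_trans. apply Cmod_le_sum.
    destruct (z (p1 (p2 n))) as [x y]. simpl. right. f_equal; f_equal; ring.
  - apply cz_plus.
    + intros eps He. destruct (cz_comp (fun m => fst (z m) - l1) p1 p2 i2 c1 eps He) as [N HN].
      exists N. intros n Hn. rewrite Rabs_Rabsolu. apply HN; auto.
    + intros eps He. destruct (c2 eps He) as [N HN].
      exists N. intros n Hn. rewrite Rabs_Rabsolu. apply HN; auto.
Qed.

Lemma Cmod_le_mnorm_a X : Cmod (ma X) <= mnorm X.
Proof. unfold mnorm. pose proof (Cmod_ge_0 (mb X)). pose proof (Cmod_ge_0 (mc X)). pose proof (Cmod_ge_0 (md X)). lra. Qed.
Lemma Cmod_le_mnorm_b X : Cmod (mb X) <= mnorm X.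
Proof. unfold mnorm. pose proof (Cmod_ge_0 (ma X)). pose proof (Cmod_ge_0 (mc X)). pose proof (Cmod_ge_0 (md X)). lra. Qed.
Lemma Cmod_le_mnorm_c X : Cmod (mc X) <= mnorm X.
Proof. unfold mnorm. pose proof (Cmod_ge_0 (mb X)). pose proof (Cmod_ge_0 (ma X)). pose proof (Cmod_ge_0 (md X)). lra. Qed.
Lemma Cmod_le_mnorm_d X : Cmod (md X) <= mnorm X.
Proof. unfold mnorm. pose proof (Cmod_ge_0 (mb X)). pose proof (Cmod_ge_0 (mc X)). pose proof (Cmod_ge_0 (ma X)). lra. Qed.

Lemma cz_abs_intro u : cz u -> cz (fun n => Rabs (u n)).
Proof. intros H eps He. destruct (H eps He) as [N HN]. exists N. intros. rewrite Rabs_Rabsolu. auto. Qed.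

Lemma BWM (X : nat -> M2) K : (forall n, mnorm (X n) <= K) ->
  exists phi, inc phi /\ exists L, mconv (fun n => X (phi n)) L.
Proof. intros HK.
  destruct (BWC (fun n => ma (X n)) K) as [p1 [i1 [l1 c1]]].
  { intro n. eapply Rle_trans. apply Cmod_le_mnorm_a. auto. }
  destruct (BWC (fun n => mb (X (p1 n))) K) as [p2 [i2 [l2 c2]]].
  { intro n. eapply Rle_trans. apply Cmod_le_mnorm_b. auto. }
  destruct (BWC (fun n => mc (X (p1 (p2 n)))) K) as [p3 [i3 [l3 c3]]].
  { intro n. eapply Rle_trans. apply Cmod_le_mnorm_c. auto. }
  destruct (BWC (fun n => md (X (p1 (p2 (p3 n))))) K) as [p4 [i4 [l4 c4]]].
  { intro n. eapply Rle_trans. apply Cmod_le_mnorm_d. auto. }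
  exists (fun n => p1 (p2 (p3 (p4 n)))). split.
  { apply inc_comp; auto. apply inc_comp; auto. apply inc_comp; auto. }
  exists (mkM2 l1 l2 l3 l4). unfold mconv, mnorm, msub. simpl.
  repeat apply cz_plus.
  - apply (cz_comp (fun m => Cmod (Cminus (ma (X m)) l1)) p1 (fun n => p2 (p3 (p4 n)))); auto.
    apply inc_comp; auto. apply inc_comp; auto.
  - apply (cz_comp (fun m => Cmod (Cminus (mb (X m)) l2)) (fun n => p1 (p2 n)) (fun n => p3 (p4 n))); auto.
    apply inc_comp; auto.
  - apply (cz_comp (fun m => Cmod (Cminus (mc (X m)) l3)) (fun n => p1 (p2 (p3 n))) p4); auto.
  - auto.
Qed.

Lemma BDD G X K : kleinian G -> (forall k, G (X k)) -> (forall n, mnorm (X n) <= K) ->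
  exists phi, inc phi /\ exists N, forall k, (N <= k)%nat -> X (phi k) = X (phi N) \/ X (phi k) = mneg (X (phi N)).
Proof. intros HG HX HK. destruct (BWM X K HK) as [phi [ip [L HL]]].
  exists phi. split; auto. apply (CL0 G (fun k => X (phi k)) L HG); auto. Qed.

Definition cj (P g : M2) : M2 := mmul (mmul P g) (minv P).
Definition cg (P : M2) (G : M2 -> Prop) (A : M2) : Prop := exists g, G g /\ A = cj P g.

Lemma cj_inv P A : SL2 P -> cj (minv P) (cj P A) = A.
Proof. intro H. unfold cj. rewrite minv_minv.
  rewrite (mmul_assoc (minv P) (mmul P A) (minv P)), (mmul_assoc (minv P) P A), minv_l, mmul_mid_l by auto.
  rewrite <- (mmul_assoc A), minv_l, mmul_mid_r by auto. auto. Qed.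

Lemma cj_mul P g h : SL2 P -> mmul (cj P g) (cj P h) = cj P (mmul g h).
Proof. intro H. unfold cj. rewrite <- !mmul_assoc. f_equal. f_equal.
  rewrite (mmul_assoc (minv P) P), minv_l, mmul_mid_l by auto. auto. Qed.

Lemma cj_mid P : SL2 P -> cj P mid = mid.
Proof. intro H. unfold cj. rewrite mmul_mid_r. apply minv_r; auto. Qed.

Lemma cj_mneg P g : cj P (mneg g) = mneg (cj P g).
Proof. unfold cj. rewrite mneg_mul_r, mneg_mul_l. auto. Qed.

Lemma cj_minv P g : minv (cj P g) = cj P (minv g).
Proof. unfold cj. rewrite !minv_mul, minv_minv, mmul_assoc. auto. Qed.

Lemma cj_SL2 P g : SL2 P -> SL2 g -> SL2 (cj P g).
Proof. intros. unfold cj. apply SL2_mul. apply SL2_mul; auto. apply SL2_minv; auto. Qed.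

Lemma cj_mpow P g n : SL2 P -> mpow (cj P g) n = cj P (mpow g n).
Proof. intro H. induction n; simpl. rewrite cj_mid; auto. rewrite IHn, cj_mul; auto. Qed.

Lemma cj_id P X : SL2 P -> psl_is_id (cj P X) -> psl_is_id X.
Proof. intros H [e|e]; unfold psl_is_id.
  - left. rewrite <- (cj_inv P X), e, cj_mid; auto. apply SL2_minv; auto.
  - right. rewrite <- (cj_inv P X), e, cj_mneg, cj_mid; auto. apply SL2_minv; auto. Qed.

Lemma id_cj P X : SL2 P -> psl_is_id X -> psl_is_id (cj P X).
Proof. intros H [e|e]; unfold psl_is_id; rewrite e. left; apply cj_mid; auto.
  right. rewrite cj_mneg, cj_mid; auto. Qed.

Lemma mnorm_cj P X : mnorm (cj P X) <= mnorm P * mnorm (minv P) * mnorm X.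
Proof. unfold cj. eapply Rle_trans. apply mnorm_mul. pose proof (mnorm_mul P X).
  pose proof (mnorm_ge0 (minv P)). pose proof (mnorm_ge0 X). pose proof (mnorm_ge0 P).
  pose proof (mnorm_ge0 (mmul P X)). nra. Qed.

Lemma msub_cj P X Y : msub (cj P X) (cj P Y) = cj P (msub X Y).
Proof. unfold cj. mring. Qed.

Lemma psl_dist_cj P X Y : psl_dist (cj P X) (cj P Y) <= mnorm P * mnorm (minv P) * psl_dist X Y.
Proof. unfold psl_dist. rewrite <- cj_mneg, !msub_cj.
  pose proof (mnorm_cj P (msub X Y)). pose proof (mnorm_cj P (msub X (mneg Y))).
  pose proof (mnorm_ge0 (minv P)). pose proof (mnorm_ge0 P).
  destruct (Rle_dec (mnorm (msub X Y)) (mnorm (msub X (mneg Y)))).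
  - rewrite (Rmin_left (mnorm (msub X Y))) by auto. eapply Rle_trans. apply Rmin_l. auto.
  - rewrite (Rmin_right (mnorm (msub X Y))) by lra. eapply Rle_trans. apply Rmin_r. auto. Qed.

Lemma conj_kleinian P G : SL2 P -> kleinian G -> kleinian (cg P G).
Proof. intros HP [[HS [Hid [Hmul [Hinv Hneg]]]] [Hdisc Htf]]. split; [|split].
  - split; [|split; [|split; [|split]]].
    + intros A [g [Gg ->]]. apply cj_SL2; auto.
    + exists mid. split; auto. rewrite cj_mid; auto.
    + intros A B [g [Gg ->]] [h [Gh ->]]. exists (mmul g h). split; auto. rewrite cj_mul; auto.
    + intros A [g [Gg ->]]. exists (minv g). split; auto. apply cj_minv.
    + intros A [g [Gg ->]]. exists (mneg g). split; auto. rewrite cj_mneg; auto.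
  - intros A [g [Gg ->]]. destruct (Hdisc g Gg) as [eps [He Hd]].
    set (K := mnorm (minv P) * mnorm (minv (minv P)) + 1).
    assert (HK : 0 < K). { unfold K. pose proof (mnorm_ge0 (minv P)). pose proof (mnorm_ge0 (minv (minv P))). nra. }
    exists (eps / K). split. apply Rdiv_lt_0_compat; auto.
    intros B [h [Gh ->]] Hlt.
    assert (d1 : psl_dist g h < eps).
    { pose proof (psl_dist_cj (minv P) (cj P g) (cj P h)). rewrite !cj_inv in H by auto.
      pose proof (psl_dist_ge0 (cj P g) (cj P h)).
      pose proof (mnorm_ge0 (minv P)). pose proof (mnorm_ge0 (minv (minv P))).
      eapply Rle_lt_trans. apply H.
      apply Rle_lt_trans with (K * psl_dist (cj P g) (cj P h)). unfold K. nra.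
      apply Rmult_lt_reg_l with (/ K). apply Rinv_0_lt_compat; auto.
      rewrite <- Rmult_assoc, Rinv_l by lra. unfold Rdiv in Hlt. lra. }
    specialize (Hd h Gh d1). apply psl_dist0 in Hd. apply psl_dist_pm.
    destruct Hd as [->| ->]; auto. right. rewrite cj_mneg. auto.
  - intros A n [g [Gg ->]] Hn Hid'. rewrite cj_mpow in Hid' by auto.
    apply cj_id in Hid'; auto. apply id_cj; auto. apply (Htf g n); auto.
Qed.

Lemma trivial_kleinian : kleinian trivial_group.
Proof. unfold trivial_group. split; [|split].
  - split; [|split; [|split; [|split]]].
    + intros A [->| ->]. apply SL2_mid. apply SL2_mneg, SL2_mid.
    + left; auto.
    + intros A B [->| ->] [->| ->]; unfold psl_is_id;
        rewrite ?mneg_mul_l, ?mneg_mul_r, ?mmul_mid_l, ?mneg_mneg; auto.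
    + intros A [->| ->]; unfold psl_is_id; rewrite ?minv_mneg, minv_mid; auto.
    + intros A [->| ->]; unfold psl_is_id; rewrite ?mneg_mneg; auto.
  - intros A HA. exists 1. split. lra. intros B HB _. apply psl_dist_pm.
    destruct HA as [->| ->], HB as [->| ->]; auto. rewrite mneg_mneg; auto.
  - intros A n HA _ _. auto.
Qed.

Definition vz (z0 : C) (s : R) : C := Cmult (RtoC (1 - s)) z0.
Definition Pm (z0 : C) (s : R) : M2 :=
  mkM2 (Cinv (RtoC s)) (Copp (Cmult (vz z0 s) (Cinv (RtoC s)))) (RtoC 0) (RtoC s).

Lemma RtoC_neq0 s : s <> 0 -> RtoC s <> RtoC 0.
Proof. intros H E. apply H. injection E. auto. Qed.

Lemma Pm_SL2 z0 s : s <> 0 -> SL2 (Pm z0 s).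
Proof. intro H. apply RtoC_neq0 in H. unfold SL2, mdet, Pm; simpl. field. auto. Qed.

Lemma Pm_entries z0 s g : s <> 0 ->
  let A := cj (Pm z0 s) g in let v := vz z0 s in
  ma A = Cminus (ma g) (Cmult (mc g) v) /\
  mc A = Cmult (mc g) (Cmult (RtoC s) (RtoC s)) /\
  md A = Cplus (Cmult (mc g) v) (md g) /\
  Cmult (mb A) (Cmult (RtoC s) (RtoC s)) =
    Cminus (Cminus (Cplus (Cmult (ma g) v) (mb g)) (Cmult (Cmult (mc g) v) v)) (Cmult (md g) v).
Proof. intro H. apply RtoC_neq0 in H. destruct g as [a b c d]. unfold cj, Pm, minv, mmul; simpl.
  repeat split; field; auto. Qed.

Lemma R1 p q : 0 <= p -> 0 <= q -> 0 < p + q -> (p + q) / (p*p + q*q) <= 2 / (p + q).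
Proof. intros. pose proof (Rle_0_sqr (p-q)). unfold Rsqr in *. assert (0 < p*p + q*q) by nra.
  unfold Rdiv. apply Rmult_le_reg_l with ((p*p+q*q) * (p+q)). nra.
  replace ((p*p+q*q) * (p + q) * ((p + q) * / (p*p+q*q))) with ((p+q)*(p+q)) by (field; lra).
  replace ((p*p+q*q) * (p + q) * (2 * / (p + q))) with (2 * (p*p+q*q)) by (field; lra). nra. Qed.

Lemma R2 p q : 0 <= p -> 0 <= q -> 0 < p + q -> / (p*p + q*q) <= 2 / ((p + q)*(p+q)).
Proof. intros. pose proof (Rle_0_sqr (p-q)). unfold Rsqr in *. assert (0 < p*p + q*q) by nra.
  assert (0 < (p+q)*(p+q)) by (apply Rmult_lt_0_compat; auto).
  unfold Rdiv. apply Rmult_le_reg_l with ((p*p+q*q) * ((p+q)*(p+q))). apply Rmult_lt_0_compat; auto.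
  replace ((p*p+q*q) * ((p + q)*(p+q)) * / (p*p+q*q)) with ((p+q)*(p+q)) by (field; lra).
  replace ((p*p+q*q) * ((p + q)*(p+q)) * (2 * / ((p + q)*(p+q)))) with (2 * (p*p+q*q)) by (field; lra). nra. Qed.

Lemma Cmod2_R (z : C) : RtoC (Cmod z ^ 2) = Cmult z (Cconj z).
Proof. apply Cmod2_conj. Qed.

Lemma ORB h w mu eps :
  ma h = Cplus (Cmult w (mc h)) mu ->
  mb h = Cplus (Cminus (Cmult w (md h)) (Cmult w mu)) eps ->
  0 < Cmod (mc h) + Cmod (md h) ->
  Cmod (Cminus (fst (act h Opt)) w) <= (Cmod mu + Cmod w * Cmod mu + Cmod eps) * 2 / (Cmod (mc h) + Cmod (md h)) /\
  snd (act h Opt) <= 2 / ((Cmod (mc h) + Cmod (md h)) * (Cmod (mc h) + Cmod (md h))) /\ 0 <= snd (act h Opt).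
Proof. destruct h as [a b c d]; cbn [ma mb mc md]. intros Ha Hb Hp. subst a b.
  unfold act, Opt; cbn [fst snd ma mb mc md].
  replace (Cplus (Cmult c (RtoC 0)) d) with d by ring.
  pose proof (Cmod_ge_0 c). pose proof (Cmod_ge_0 d).
  replace (Cmod d ^ 2 + Cmod c ^ 2 * 1 ^ 2) with (Cmod c * Cmod c + Cmod d * Cmod d) by ring.
  assert (HD : 0 < Cmod c * Cmod c + Cmod d * Cmod d).
  { pose proof (Rle_0_sqr (Cmod c - Cmod d)). unfold Rsqr in *.
    assert (0 < (Cmod c + Cmod d) * (Cmod c + Cmod d)) by (apply Rmult_lt_0_compat; auto). nra. }
  split; [|split].
  - assert (E : RtoC (Cmod c * Cmod c + Cmod d * Cmod d) = Cplus (Cmult c (Cconj c)) (Cmult d (Cconj d))).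
    { replace (Cmod c * Cmod c + Cmod d * Cmod d) with (Cmod c ^ 2 + Cmod d ^ 2) by ring. rewrite RtoC_plus, !Cmod2_R. auto. }
    assert (Enz : Cplus (Cmult c (Cconj c)) (Cmult d (Cconj d)) <> RtoC 0).
    { rewrite <- E. apply RtoC_neq0. lra. }
    rewrite RtoC_inv by lra. rewrite E.
    replace (Cminus
     (Cmult
        (Cplus (Cmult (Cplus (Cmult (Cplus (Cmult w c) mu) (RtoC 0)) (Cplus (Cminus (Cmult w d) (Cmult w mu)) eps)) (Cconj d))
           (Cmult (Cmult (Cplus (Cmult w c) mu) (Cconj c)) (RtoC (1 ^ 2))))
        (Cinv (Cplus (Cmult c (Cconj c)) (Cmult d (Cconj d))))) w)
     with (Cmult (Cplus (Cmult (Cminus eps (Cmult w mu)) (Cconj d)) (Cmult mu (Cconj c)))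
             (Cinv (Cplus (Cmult c (Cconj c)) (Cmult d (Cconj d))))).
    2: { replace (RtoC (1^2)) with (RtoC 1) by (f_equal; ring). field. auto. }
    rewrite <- E, <- RtoC_inv by lra. rewrite Cmod_mult, Cmod_R.
    rewrite Rabs_pos_eq by (left; apply Rinv_0_lt_compat; auto).
    assert (B1 : Cmod (Cplus (Cmult (Cminus eps (Cmult w mu)) (Cconj d)) (Cmult mu (Cconj c)))
                 <= (Cmod mu + Cmod w * Cmod mu + Cmod eps) * (Cmod c + Cmod d)).
    { eapply Rle_trans. apply Cmod_triangle. rewrite !Cmod_mult, !Cmod_conj.
      assert (Cmod (Cminus eps (Cmult w mu)) <= Cmod eps + Cmod w * Cmod mu).
      { unfold Cminus. eapply Rle_trans. apply Cmod_triangle. rewrite Cmod_opp, Cmod_mult. lra. }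
      pose proof (Cmod_ge_0 mu). pose proof (Cmod_ge_0 w). pose proof (Cmod_ge_0 eps).
      pose proof (Cmod_ge_0 (Cminus eps (Cmult w mu))). nra. }
    pose proof (R1 (Cmod c) (Cmod d) H H0 Hp).
    set (K := Cmod mu + Cmod w * Cmod mu + Cmod eps).
    assert (0 <= K) by (unfold K; pose proof (Cmod_ge_0 mu); pose proof (Cmod_ge_0 w); pose proof (Cmod_ge_0 eps); nra).
    apply Rle_trans with (K * ((Cmod c + Cmod d) / (Cmod c * Cmod c + Cmod d * Cmod d))).
    + unfold Rdiv. rewrite <- Rmult_assoc. apply Rmult_le_compat_r. left; apply Rinv_0_lt_compat; auto. auto.
    + unfold Rdiv in *. rewrite Rmult_assoc. apply Rmult_le_compat_l; auto.
  - unfold Rdiv. rewrite Rmult_1_l. apply R2; auto.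
  - unfold Rdiv. rewrite Rmult_1_l. left. apply Rinv_0_lt_compat; auto.
Qed.

Lemma ctb (h : nat -> M2) z0 e :
  (exists N, forall n, (N <= n)%nat -> Cmod (Cminus (fst (act (h n) Opt)) z0) <= e n /\
      snd (act (h n) Opt) <= e n /\ 0 <= snd (act (h n) Opt)) ->
  cz e -> conv_to_boundary (fun n => act (h n) Opt) (Some z0).
Proof. intros [N HN] He. simpl. split; apply cz_lim; apply (cz_le_ev _ e); auto; exists N; intros n Hn;
  destruct (HN n Hn) as [h1 [h2 h3]].
  - rewrite Rabs_pos_eq by apply Cmod_ge_0. auto.
  - rewrite Rabs_pos_eq by auto. auto. Qed.

Definition FF (B : M2) (z0 : C) : C :=
  Cminus (Cminus (Cplus (Cmult (ma B) z0) (mb B)) (Cmult (Cmult (mc B) z0) z0)) (Cmult (md B) z0).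
Definition m1 (B : M2) (z0 : C) : C := Cminus (ma B) (Cmult z0 (mc B)).
Definition m4 (B : M2) (z0 : C) : C := Cplus (Cmult (mc B) z0) (md B).

Lemma m1m4 B z0 : SL2 B -> FF B z0 = RtoC 0 -> Cmult (m1 B z0) (m4 B z0) = RtoC 1.
Proof. unfold SL2. intros H1 H2. rewrite <- H1.
  transitivity (Cplus (mdet B) (Cmult (mc B) (FF B z0))).
  - destruct B; unfold m1, m4, mdet, FF; simpl. ring.
  - rewrite H2. ring. Qed.

Lemma pow_inv B z0 n : FF B z0 = RtoC 0 ->
  ma (mpow B n) = Cplus (Cpow (m1 B z0) n) (Cmult z0 (mc (mpow B n))) /\
  mb (mpow B n) = Cminus (Cmult z0 (md (mpow B n))) (Cmult z0 (Cpow (m1 B z0) n)) /\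
  Cplus (md (mpow B n)) (Cmult z0 (mc (mpow B n))) = Cpow (m4 B z0) n.
Proof. intro HF.
  assert (Hb : mb B = Cminus (Cplus (Cmult (Cmult (mc B) z0) z0) (Cmult (md B) z0)) (Cmult (ma B) z0)).
  { apply Cminus_eq0. rewrite <- HF. unfold FF. ring. }
  induction n as [|n IH].
  - simpl. repeat split; ring.
  - cbn [mpow]. destruct (mpow B n) as [xa xb xc xd]. cbn [ma mb mc md] in *.
    destruct IH as [E1 [E2 E3]].
    assert (E4 : xd = Cminus (Cpow (m4 B z0) n) (Cmult z0 xc)) by (rewrite <- E3; ring).
    destruct B as [a b c d]. cbn [ma mb mc md] in *. subst b.
    unfold mmul, m1, m4 in *; cbn [ma mb mc md] in *. rewrite E1, E2, E4. rewrite !Cpow_S.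
    repeat split; ring. Qed.

Lemma mpow_S B n : mpow B (S n) = mmul B (mpow B n).
Proof. reflexivity. Qed.

Lemma pow_c B z0 n : FF B z0 = RtoC 0 ->
  mc (mpow B (S n)) = Cplus (Cmult (mc B) (Cpow (m1 B z0) n)) (Cmult (m4 B z0) (mc (mpow B n))).
Proof. intro HF. destruct (pow_inv B z0 n HF) as [E1 _]. rewrite mpow_S.
  destruct (mpow B n) as [xa xb xc xd]. cbn [ma mb mc md] in *. rewrite E1.
  destruct B as [a b c d]. unfold mmul, m4; cbn [ma mb mc md]. ring. Qed.

Lemma mpow_in G B n : kleinian G -> G B -> G (mpow B n).
Proof. intros [[HS [Hid [Hmul _]]] _] HB. induction n; simpl; auto. Qed.

Lemma mpow_SL2 B n : SL2 B -> SL2 (mpow B n).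
Proof. intro H. induction n; simpl. apply SL2_mid. apply SL2_mul; auto. Qed.

Lemma cz_geom q : 0 <= q < 1 -> cz (fun n => q ^ n).
Proof. intro H. apply cz_lim. apply is_lim_seq_geom. rewrite Rabs_pos_eq; lra. Qed.

Lemma fix_contract G z0 B : kleinian G -> G B -> FF B z0 = RtoC 0 -> Cmod (m1 B z0) < 1 ->
  limit_set G (Some z0).
Proof. intros HG HB HF Hm.
  assert (HS : SL2 B) by (destruct HG as [[HS _] _]; auto).
  pose proof (m1m4 B z0 HS HF) as H14.
  set (Z := 1 + Cmod z0). assert (HZ : 1 <= Z) by (unfold Z; pose proof (Cmod_ge_0 z0); lra).
  exists (fun n => mpow B n). split. intro n. apply mpow_in; auto.
  apply ctb with (fun n => 2 * (Z * Z) * ((Cmod (m1 B z0) ^ n) * (Cmod (m1 B z0) ^ n))).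
  2: { apply cz_scal. apply cz_mult; apply cz_geom; split; auto; apply Cmod_ge_0. }
  exists O. intros n _.
  destruct (pow_inv B z0 n HF) as [E1 [E2 E3]].
  set (X := mpow B n) in *. set (mu := Cpow (m1 B z0) n) in *. set (nu := Cpow (m4 B z0) n) in *.
  assert (Hmn : Cmod mu * Cmod nu = 1).
  { unfold mu, nu. rewrite <- Cmod_mult, <- Cpow_mult_l, H14, Cpow_1_l. apply Cmod_1. }
  assert (Hnu : Cmod nu <= Z * (Cmod (mc X) + Cmod (md X))).
  { rewrite <- E3. eapply Rle_trans. apply Cmod_triangle. rewrite Cmod_mult. unfold Z.
    pose proof (Cmod_ge_0 (mc X)). pose proof (Cmod_ge_0 (md X)). pose proof (Cmod_ge_0 z0). nra. }
  pose proof (Cmod_ge_0 mu). pose proof (Cmod_ge_0 nu).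
  pose proof (Cmod_ge_0 (mc X)). pose proof (Cmod_ge_0 (md X)).
  assert (HSp : 0 < Cmod (mc X) + Cmod (md X)).
  { destruct (Rle_lt_or_eq_dec 0 (Cmod (mc X) + Cmod (md X))) as [|e]; auto. lra.
    rewrite <- e in Hnu. nra. }
  destruct (ORB X z0 mu (RtoC 0)) as [O1 [O2 O3]]; auto.
  { rewrite E1. ring. }
  { rewrite E2. ring. }
  rewrite Cmod_0 in O1.
  assert (key : 1 <= Z * Cmod mu * (Cmod (mc X) + Cmod (md X))).
  { rewrite <- Hmn. nra. }
  set (S := Cmod (mc X) + Cmod (md X)) in *.
  replace (Cmod (m1 B z0) ^ n) with (Cmod mu) by (unfold mu; rewrite Cmod_pow; auto).
  split; [|split]; auto.
  - eapply Rle_trans. apply O1. unfold Rdiv.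
    apply Rmult_le_reg_l with S; auto.
    replace (S * ((Cmod mu + Cmod z0 * Cmod mu + 0) * 2 * / S)) with (2 * Z * Cmod mu) by (unfold Z; field; lra).
    assert (0 <= Z * Cmod mu) by nra. nra.
  - eapply Rle_trans. apply O2. unfold Rdiv.
    apply Rmult_le_reg_l with (S * S). nra.
    replace (S * S * (2 * / (S * S))) with 2 by (field; lra).
    assert (1 <= (Z * Cmod mu * S) * (Z * Cmod mu * S)) by nra. nra.
Qed.

Lemma cz_invn : cz (fun n => / INR n).
Proof. apply cz_le_ev with (fun n => 2 * / (INR n + 1)).
  - exists 1%nat. intros n Hn. apply le_INR in Hn. simpl in Hn.
    rewrite Rabs_pos_eq by (left; apply Rinv_0_lt_compat; lra).
    apply Rmult_le_reg_l with (INR n * (INR n + 1)). nra.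
    replace (INR n * (INR n + 1) * / INR n) with (INR n + 1) by (field; lra).
    replace (INR n * (INR n + 1) * (2 * / (INR n + 1))) with (2 * INR n) by (field; lra). lra.
  - apply cz_scal. intros eps He. destruct (small_inv eps He) as [N HN]. exists N. intros n Hn.
    rewrite Rabs_pos_eq. auto. left; apply Rinv_0_lt_compat; pose proof (pos_INR n); lra. Qed.

Lemma C_sq1 (a : C) : Cmult a a = RtoC 1 -> a = RtoC 1 \/ a = Copp (RtoC 1).
Proof. intro H. assert (E : Cmult (Cminus a (RtoC 1)) (Cplus a (RtoC 1)) = RtoC 0).
  { transitivity (Cminus (Cmult a a) (RtoC 1)). ring. rewrite H. ring. }
  apply (f_equal Cmod) in E. rewrite Cmod_mult, Cmod_0 in E. apply Rmult_integral in E.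
  destruct E as [E|E]; apply Cmod_eq_0 in E; [left|right]; apply Cminus_eq0.
  auto. rewrite <- E. ring. Qed.

Lemma Cmod_m1_one B z0 : SL2 B -> FF B z0 = RtoC 0 -> Cmod (m1 B z0) * Cmod (m4 B z0) = 1.
Proof. intros. rewrite <- Cmod_mult, m1m4 by auto. apply Cmod_1. Qed.

Lemma fix_parabolic G z0 B : kleinian G -> G B -> FF B z0 = RtoC 0 -> m1 B z0 = m4 B z0 ->
  ~ psl_is_id B -> limit_set G (Some z0).
Proof. intros HG HB HF Heq Hnid.
  assert (HS : SL2 B) by (destruct HG as [[HS _] _]; auto).
  pose proof (m1m4 B z0 HS HF) as H14. rewrite <- Heq in H14.
  assert (Hm1 : Cmod (m1 B z0) = 1).
  { pose proof (Cmod_m1_one B z0 HS HF). rewrite <- Heq in H. pose proof (Cmod_ge_0 (m1 B z0)). nra. }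
  assert (Hc : mc B <> RtoC 0).
  { intro Hc0. apply Hnid. unfold psl_is_id.
    assert (Hb : mb B = Cminus (Cplus (Cmult (Cmult (mc B) z0) z0) (Cmult (md B) z0)) (Cmult (ma B) z0)).
    { apply Cminus_eq0. rewrite <- HF. unfold FF. ring. }
    destruct B as [a b c d]. unfold m1, m4 in *. cbn [ma mb mc md] in *. subst c.
    assert (Ha : a = d). { transitivity (Cminus a (Cmult z0 (RtoC 0))). ring. rewrite Heq. ring. }
    subst d. assert (Hb0 : b = RtoC 0) by (rewrite Hb; ring).
    subst b. assert (Haa : Cmult a a = RtoC 1). { rewrite <- H14. ring. }
    destruct (C_sq1 a Haa) as [->| ->]; [left|right]; unfold mid, mneg; cbn [ma mb mc md]; f_equal; ring. }
  set (Z := 1 + Cmod z0). assert (HZ : 1 <= Z) by (unfold Z; pose proof (Cmod_ge_0 z0); lra).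
  assert (Hcn : forall n, Cmult (mc (mpow B n)) (m1 B z0) = Cmult (RtoC (INR n)) (Cmult (mc B) (Cpow (m1 B z0) n))).
  { induction n. simpl. ring. rewrite (pow_c B z0) by auto. rewrite <- Heq.
    transitivity (Cplus (Cmult (mc B) (Cmult (Cpow (m1 B z0) n) (m1 B z0))) (Cmult (m1 B z0) (Cmult (mc (mpow B n)) (m1 B z0)))). ring.
    rewrite IHn, S_INR, RtoC_plus, Cpow_S. ring. }
  pose proof (Cmod_gt_0 (mc B)) as [Hcp _]. specialize (Hcp Hc).
  exists (fun n => mpow B n). split. intro n. apply mpow_in; auto.
  apply ctb with (fun n => (2 * Z / Cmod (mc B) + 2 / (Cmod (mc B) * Cmod (mc B))) * / INR n).
  2: { apply cz_scal. apply cz_invn. }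
  exists 1%nat. intros n Hn.
  destruct (pow_inv B z0 n HF) as [E1 [E2 E3]].
  assert (Hcm : Cmod (mc (mpow B n)) = INR n * Cmod (mc B)).
  { pose proof (f_equal Cmod (Hcn n)). rewrite !Cmod_mult, Hm1, Cmod_R, Cmod_pow, Hm1, pow1 in H.
    rewrite Rabs_pos_eq in H by apply pos_INR. lra. }
  set (X := mpow B n) in *. set (mu := Cpow (m1 B z0) n) in *.
  assert (Hmu : Cmod mu = 1) by (unfold mu; rewrite Cmod_pow, Hm1; apply pow1).
  apply le_INR in Hn. simpl in Hn.
  pose proof (Cmod_ge_0 (md X)).
  assert (HSp : 0 < Cmod (mc X) + Cmod (md X)) by (rewrite Hcm; nra).
  destruct (ORB X z0 mu (RtoC 0)) as [O1 [O2 O3]]; auto.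
  { rewrite E1. ring. }
  { rewrite E2. ring. }
  rewrite Cmod_0, Hmu in O1.
  set (S := Cmod (mc X) + Cmod (md X)) in *.
  set (c0 := Cmod (mc B)) in *.
  assert (HS1 : INR n * c0 <= S) by (unfold S; rewrite Hcm; lra).
  assert (Hnc : 0 < INR n * c0) by nra.
  split; [|split]; auto.
  - eapply Rle_trans. apply O1.
    apply Rle_trans with (2 * Z / c0 * / INR n).
    + assert (HI : / S <= / c0 * / INR n) by (rewrite <- Rinv_mult; apply Rinv_le_contravar; nra).
      replace ((1 + Cmod z0 * 1 + 0) * 2 / S) with (2*Z * /S) by (unfold Z, Rdiv; ring).
      replace (2*Z/c0 * /INR n) with (2*Z*(/c0 * /INR n)) by (unfold Rdiv; ring).
      apply Rmult_le_compat_l; lra.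
    + assert (0 <= 2 / (c0 * c0) * / INR n).
      { unfold Rdiv. apply Rmult_le_pos. apply Rmult_le_pos. lra. left; apply Rinv_0_lt_compat; nra.
        left; apply Rinv_0_lt_compat; lra. }
      nra.
  - eapply Rle_trans. apply O2.
    apply Rle_trans with (2 / (c0 * c0) * / INR n).
    + assert (HI : / (S * S) <= / (c0 * c0) * / INR n).
      { rewrite <- Rinv_mult. apply Rinv_le_contravar. assert (0 < c0 * c0) by nra. nra.
        apply Rle_trans with ((INR n * c0) * (INR n * c0)). nra. nra. }
      replace (2 / (S*S)) with (2 * / (S*S)) by (unfold Rdiv; ring).
      replace (2/(c0*c0) * /INR n) with (2*(/(c0*c0) * /INR n)) by (unfold Rdiv; ring).
      apply Rmult_le_compat_l; lra.
    + assert (0 <= 2 * Z / c0 * / INR n).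
      { unfold Rdiv. apply Rmult_le_pos. apply Rmult_le_pos. lra. left; apply Rinv_0_lt_compat; nra.
        left; apply Rinv_0_lt_compat; lra. }
      nra.
Qed.

Lemma mpow_add B k m : mpow B (k + m) = mmul (mpow B k) (mpow B m).
Proof. induction k; simpl. rewrite mmul_mid_l; auto. rewrite IHk, mmul_assoc. auto. Qed.

Lemma fix_elliptic G z0 B : kleinian G -> G B -> FF B z0 = RtoC 0 -> m1 B z0 <> m4 B z0 ->
  Cmod (m1 B z0) = 1 -> ~ psl_is_id B -> False.
Proof. intros HG HB HF Hne Hm1 Hnid.
  assert (HS : SL2 B) by (destruct HG as [[HS _] _]; auto).
  pose proof (Cmod_m1_one B z0 HS HF) as H14. rewrite Hm1 in H14.
  assert (Hcn : forall n, Cmult (mc (mpow B n)) (Cminus (m4 B z0) (m1 B z0)) =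
                          Cmult (mc B) (Cminus (Cpow (m4 B z0) n) (Cpow (m1 B z0) n))).
  { induction n. simpl. ring. rewrite (pow_c B z0) by auto.
    transitivity (Cplus (Cmult (mc B) (Cmult (Cpow (m1 B z0) n) (Cminus (m4 B z0) (m1 B z0))))
        (Cmult (m4 B z0) (Cmult (mc (mpow B n)) (Cminus (m4 B z0) (m1 B z0))))). ring.
    rewrite IHn, !Cpow_S. ring. }
  assert (Hd : 0 < Cmod (Cminus (m4 B z0) (m1 B z0))).
  { apply Cmod_gt_0. intro E. apply Hne. symmetry. apply Cminus_eq0. auto. }
  set (Cc := 2 * Cmod (mc B) / Cmod (Cminus (m4 B z0) (m1 B z0))).
  assert (Hcb : forall n, Cmod (mc (mpow B n)) <= Cc).
  { intro n. pose proof (f_equal Cmod (Hcn n)). rewrite !Cmod_mult in H.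
    assert (Cmod (Cminus (Cpow (m4 B z0) n) (Cpow (m1 B z0) n)) <= 2).
    { unfold Cminus. eapply Rle_trans. apply Cmod_triangle. rewrite Cmod_opp, !Cmod_pow, Hm1.
      rewrite (Rmult_1_l) in H14. rewrite H14, pow1. lra. }
    unfold Cc. unfold Rdiv. apply Rmult_le_reg_r with (Cmod (Cminus (m4 B z0) (m1 B z0))). auto.
    rewrite Rmult_assoc, Rinv_l, Rmult_1_r by lra. rewrite H. pose proof (Cmod_ge_0 (mc B)). nra. }
  set (K := 2 + 2 * (Cmod z0 * Cc) + (Cmod z0 * (2 + Cmod z0 * Cc)) + Cc).
  assert (HK : forall n, mnorm (mpow B n) <= K).
  { intro n. destruct (pow_inv B z0 n HF) as [E1 [E2 E3]]. specialize (Hcb n).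
    assert (Hmu : Cmod (Cpow (m1 B z0) n) = 1) by (rewrite Cmod_pow, Hm1; apply pow1).
    assert (Hnu : Cmod (Cpow (m4 B z0) n) = 1) by (rewrite Cmod_pow; rewrite Rmult_1_l in H14; rewrite H14; apply pow1).
    assert (Ed : md (mpow B n) = Cminus (Cpow (m4 B z0) n) (Cmult z0 (mc (mpow B n)))) by (rewrite <- E3; ring).
    set (X := mpow B n) in *. pose proof (Cmod_ge_0 z0). pose proof (Cmod_ge_0 (mc X)).
    assert (Ha : Cmod (ma X) <= 1 + Cmod z0 * Cc).
    { rewrite E1. eapply Rle_trans. apply Cmod_triangle. rewrite Cmod_mult, Hmu. nra. }
    assert (Hdd : Cmod (md X) <= 1 + Cmod z0 * Cc).
    { rewrite Ed. unfold Cminus. eapply Rle_trans. apply Cmod_triangle. rewrite Cmod_opp, Cmod_mult, Hnu. nra. }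
    assert (Hbb : Cmod (mb X) <= Cmod z0 * (2 + Cmod z0 * Cc)).
    { rewrite E2. unfold Cminus. eapply Rle_trans. apply Cmod_triangle. rewrite Cmod_opp, !Cmod_mult, Hmu. pose proof (Rmult_le_compat_l _ _ _ H Hdd). lra. }
    unfold mnorm, K. lra. }
  destruct (BDD G (fun n => mpow B n) K HG) as [phi [ip [N HN]]].
  { intro n. apply mpow_in; auto. } auto.
  specialize (HN (S N) ltac:(lia)). cbn beta in HN.
  pose proof (ip N) as Hlt.
  set (dd := (phi (S N) - phi N)%nat).
  assert (E : phi (S N) = (dd + phi N)%nat) by (unfold dd; lia).
  rewrite E, mpow_add in HN.
  assert (HSP : SL2 (mpow B (phi N))) by (apply mpow_SL2; auto).
  assert (Hid : psl_is_id (mpow B dd)).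
  { assert (T : mpow B dd = mmul (mmul (mpow B dd) (mpow B (phi N))) (minv (mpow B (phi N)))).
    { rewrite <- mmul_assoc, minv_r, mmul_mid_r; auto. }
    destruct HN as [e|e]; [left|right]; rewrite T, e.
    - apply minv_r; auto.
    - rewrite mneg_mul_l, minv_r; auto. }
  destruct HG as [_ [_ Htf]]. apply Hnid. apply (Htf B dd); auto. unfold dd; lia.
Qed.

Lemma FIX G z0 B : kleinian G -> G B -> FF B z0 = RtoC 0 -> ~ psl_is_id B -> limit_set G (Some z0).
Proof. intros HG HB HF Hnid.
  assert (HS : SL2 B) by (destruct HG as [[HS _] _]; auto).
  pose proof (Cmod_m1_one B z0 HS HF) as H14.
  destruct (Rtotal_order (Cmod (m1 B z0)) 1) as [h|[h|h]].
  - apply (fix_contract G z0 B); auto.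
  - destruct (classic (m1 B z0 = m4 B z0)) as [e|e].
    + apply (fix_parabolic G z0 B); auto.
    + exfalso. apply (fix_elliptic G z0 B); auto.
  - apply (fix_contract G z0 (minv B)); auto.
    + destruct HG as [[_ [_ [_ [Hinv _]]]] _]. auto.
    + transitivity (Copp (FF B z0)). destruct B as [a b c d]; unfold FF, minv; cbn [ma mb mc md]; ring.
      rewrite HF. ring.
    + replace (m1 (minv B) z0) with (m4 B z0) by (destruct B as [a b c d]; unfold m1, m4, minv; cbn [ma mb mc md]; ring).
      pose proof (Cmod_ge_0 (m4 B z0)). nra.
Qed.

Lemma Pm_rel z0 s g : s <> 0 ->
  ma g = Cplus (Cmult (vz z0 s) (mc g)) (ma (cj (Pm z0 s) g)) /\
  mb g = Cplus (Cminus (Cmult (vz z0 s) (md g)) (Cmult (vz z0 s) (ma (cj (Pm z0 s) g))))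
               (Cmult (mb (cj (Pm z0 s) g)) (Cmult (RtoC s) (RtoC s))) /\
  md g = Cminus (md (cj (Pm z0 s) g)) (Cmult (mc g) (vz z0 s)).
Proof. intro H. destruct (Pm_entries z0 s g H) as [E1 [E2 [E3 E4]]]. cbv zeta in *.
  rewrite E1, E3, E4. repeat split; ring. Qed.

Lemma vz_bound z0 s : 0 < s <= 1 -> Cmod (vz z0 s) <= Cmod z0.
Proof. intro H. unfold vz. rewrite Cmod_mult, Cmod_R. rewrite Rabs_pos_eq by lra.
  pose proof (Cmod_ge_0 z0). nra. Qed.

Lemma vz_diff z0 s : 0 <= s -> Cmod (Cminus (vz z0 s) z0) = s * Cmod z0.
Proof. intro H. unfold vz. replace (Cminus (Cmult (RtoC (1 - s)) z0) z0) with (Cmult (RtoC (- s)) z0).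
  rewrite Cmod_mult, Cmod_R, Rabs_Ropp, Rabs_pos_eq; auto.
  rewrite RtoC_minus, RtoC_opp. ring. Qed.

Lemma Cmod_le_mnorm_all X : Cmod (ma X) <= mnorm X /\ Cmod (mb X) <= mnorm X /\ Cmod (mc X) <= mnorm X /\ Cmod (md X) <= mnorm X.
Proof. split; [|split; [|split]]. apply Cmod_le_mnorm_a. apply Cmod_le_mnorm_b. apply Cmod_le_mnorm_c. apply Cmod_le_mnorm_d. Qed.

Lemma ML_unbounded G z0 s g A :
  ~ limit_set G (Some z0) -> (forall k, 0 < s k <= 1) -> cz s -> (forall k, G (g k)) ->
  mconv (fun k => cj (Pm z0 (s k)) (g k)) A ->
  (forall M N, exists k, (N <= k)%nat /\ M < Cmod (mc (g k))) -> False.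
Proof. intros HnL Hs Hcs HG HA Hub. apply HnL.
  destruct (mconv_bounded _ _ HA) as [KA HKA].
  assert (sel : forall j : nat, exists k, (j <= k)%nat /\ INR j + 1 < Cmod (mc (g k))) by (intro j; apply Hub).
  set (kk := fun j => proj1_sig (constructive_indefinite_description _ (sel j))).
  assert (Hkk : forall j, (j <= kk j)%nat /\ INR j + 1 < Cmod (mc (g (kk j)))).
  { intro j. unfold kk. destruct constructive_indefinite_description. auto. }
  set (Z := Cmod z0). assert (HZ : 0 <= Z) by apply Cmod_ge_0.
  set (K1 := (KA + Z * KA + KA) * 2).
  exists (fun j => g (kk j)). split. intro; auto.
  apply ctb with (fun j => K1 * / (INR j + 1) + s (kk j) * Z + 2 * / (INR j + 1)).
  2: { apply cz_plus. apply cz_plus. apply cz_scal. intros eps He. destruct (small_inv eps He) as [N HN].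
       exists N. intros. rewrite Rabs_pos_eq. auto. left; apply Rinv_0_lt_compat; pose proof (pos_INR n); lra.
       apply (cz_le _ (fun j => Z * s (kk j))). intro n. right. rewrite Rmult_comm.
       rewrite Rabs_pos_eq; auto. pose proof (Hs (kk n)). nra.
       apply cz_scal. apply (cz_subseq s kk). intro n; apply Hkk. auto.
       apply cz_scal. intros eps He. destruct (small_inv eps He) as [N HN].
       exists N. intros. rewrite Rabs_pos_eq. auto. left; apply Rinv_0_lt_compat; pose proof (pos_INR n); lra. }
  exists O. intros j _.
  destruct (Hkk j) as [_ Hc]. set (k := kk j) in *. set (t := s k).
  assert (Ht : 0 < t <= 1) by apply Hs.
  destruct (Pm_rel z0 t (g k)) as [E1 [E2 _]]. lra.
  set (Ak := cj (Pm z0 t) (g k)) in *.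
  destruct (Cmod_le_mnorm_all Ak) as [Ba [Bb [Bc Bd]]]. specialize (HKA k). fold t Ak in HKA.
  set (v := vz z0 t) in *.
  pose proof (Cmod_ge_0 (mc (g k))). pose proof (Cmod_ge_0 (md (g k))). pose proof (pos_INR j).
  destruct (ORB (g k) v (ma Ak) (Cmult (mb Ak) (Cmult (RtoC t) (RtoC t)))) as [O1 [O2 O3]].
  { rewrite E1. ring. } { rewrite E2. ring. } { lra. }
  set (S := Cmod (mc (g k)) + Cmod (md (g k))) in *.
  assert (Hv : Cmod v <= Z) by (apply vz_bound; auto).
  assert (He : Cmod (Cmult (mb Ak) (Cmult (RtoC t) (RtoC t))) <= KA).
  { rewrite !Cmod_mult, Cmod_R. rewrite Rabs_pos_eq by lra. pose proof (Cmod_ge_0 (mb Ak)).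
    assert (t * t <= 1) by nra. assert (0 <= t * t) by nra.
    pose proof (Rmult_le_compat_l (Cmod (mb Ak)) _ _ H2 H3). lra. }
  assert (Hal : Cmod (ma Ak) <= KA) by lra.
  pose proof (Cmod_ge_0 (ma Ak)) as Pa. pose proof (Cmod_ge_0 v) as Pv.
  assert (Num : Cmod (ma Ak) + Cmod v * Cmod (ma Ak) + Cmod (Cmult (mb Ak) (Cmult (RtoC t) (RtoC t))) <= KA + Z * KA + KA).
  { pose proof (Rmult_le_compat _ _ _ _ Pv Pa Hv Hal). lra. }
  assert (HS : INR j + 1 < S) by (unfold S; lra).
  assert (HSi : / S <= / (INR j + 1)) by (apply Rinv_le_contravar; lra).
  assert (0 < / S) by (apply Rinv_0_lt_compat; lra).
  split; [|split]; auto.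
  - replace (Cminus (fst (act (g k) Opt)) z0) with (Cplus (Cminus (fst (act (g k) Opt)) v) (Cminus v z0)) by ring.
    eapply Rle_trans. apply Cmod_triangle. replace (Cmod (Cminus v z0)) with (t * Z) by (unfold v; rewrite vz_diff by lra; auto).
    assert (Cmod (Cminus (fst (act (g k) Opt)) v) <= K1 * / (INR j + 1)).
    { eapply Rle_trans. apply O1. unfold Rdiv, K1.
      pose proof (Cmod_ge_0 (Cmult (mb Ak) (Cmult (RtoC t) (RtoC t)))).
      assert (0 <= Cmod (ma Ak) + Cmod v * Cmod (ma Ak) + Cmod (Cmult (mb Ak) (Cmult (RtoC t) (RtoC t)))) by nra.
      apply Rle_trans with ((KA + Z * KA + KA) * 2 * / S).
      apply Rmult_le_compat_r. lra. lra.
      apply Rmult_le_compat_l. nra. auto. }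
    assert (0 <= 2 * / (INR j + 1)) by (left; apply Rmult_lt_0_compat; [lra|apply Rinv_0_lt_compat; lra]).
    fold t. lra.
  - eapply Rle_trans. apply O2.
    assert (0 <= K1 * / (INR j + 1)).
    { unfold K1. apply Rmult_le_pos. pose proof (Cmod_ge_0 (ma Ak)). nra. left; apply Rinv_0_lt_compat; lra. }
    assert (0 <= s k * Z) by (pose proof (Hs k); nra).
    assert (2 / (S * S) <= 2 * / (INR j + 1)).
    { unfold Rdiv. apply Rmult_le_compat_l. lra. apply Rle_trans with (/ S); auto.
      apply Rinv_le_contravar. lra. nra. }
    unfold t in *. lra.
Qed.

Lemma ML_bounded G z0 s g A M :
  kleinian G -> ~ limit_set G (Some z0) -> (forall k, 0 < s k <= 1) -> cz s -> (forall k, G (g k)) ->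
  mconv (fun k => cj (Pm z0 (s k)) (g k)) A ->
  (forall k, Cmod (mc (g k)) <= M) -> psl_is_id A.
Proof. intros HG HnL Hs Hcs HGg HA HM.
  destruct (mconv_bounded _ _ HA) as [KA HKA].
  set (Z := Cmod z0). assert (HZ : 0 <= Z) by apply Cmod_ge_0.
  assert (HM0 : 0 <= M) by (specialize (HM O); pose proof (Cmod_ge_0 (mc (g O))); lra).
  assert (HKA0 : 0 <= KA) by (specialize (HKA O); pose proof (mnorm_ge0 (cj (Pm z0 (s O)) (g O))); lra).
  set (Kd := KA + M * Z).
  assert (Hg : forall k, mnorm (g k) <= Kd + (KA + Z * KA + Z * Kd) + M + Kd).
  { intro k. pose proof (Hs k) as Ht. destruct (Pm_rel z0 (s k) (g k)) as [E1 [E2 E3]]. lra.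
    set (Ak := cj (Pm z0 (s k)) (g k)) in *. specialize (HKA k). fold Ak in HKA.
    destruct (Cmod_le_mnorm_all Ak) as [Ba [Bb [Bc Bd]]].
    assert (Hv : Cmod (vz z0 (s k)) <= Z) by (apply vz_bound; auto).
    pose proof (Cmod_ge_0 (vz z0 (s k))) as Pv. specialize (HM k). pose proof (Cmod_ge_0 (mc (g k))) as Pc.
    assert (Ha : Cmod (ma (g k)) <= Kd).
    { rewrite E1. eapply Rle_trans. apply Cmod_triangle. rewrite Cmod_mult.
      pose proof (Rmult_le_compat _ _ _ _ Pv Pc Hv HM). unfold Kd. lra. }
    assert (Hd : Cmod (md (g k)) <= Kd).
    { rewrite E3. unfold Cminus. eapply Rle_trans. apply Cmod_triangle. rewrite Cmod_opp, Cmod_mult.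
      pose proof (Rmult_le_compat _ _ _ _ Pc Pv HM Hv). unfold Kd. lra. }
    assert (Hb : Cmod (mb (g k)) <= KA + Z * KA + Z * Kd).
    { rewrite E2. eapply Rle_trans. apply Cmod_triangle. unfold Cminus.
      pose proof (Cmod_triangle (Cmult (vz z0 (s k)) (md (g k))) (Copp (Cmult (vz z0 (s k)) (ma Ak)))).
      rewrite Cmod_opp, !Cmod_mult in H. rewrite !Cmod_mult, Cmod_R, Rabs_pos_eq by lra.
      pose proof (Cmod_ge_0 (md (g k))). pose proof (Cmod_ge_0 (ma Ak)). pose proof (Cmod_ge_0 (mb Ak)).
      pose proof (Rmult_le_compat _ _ _ _ Pv H0 Hv Hd).
      assert (Cmod (ma Ak) <= KA) by lra.
      pose proof (Rmult_le_compat _ _ _ _ Pv H1 Hv H4).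
      assert (s k * s k <= 1) by nra. assert (0 <= s k * s k) by nra.
      pose proof (Rmult_le_compat_l (Cmod (mb Ak)) _ _ H2 H6). lra. }
    unfold mnorm. lra. }
  destruct (BDD G g _ HG HGg Hg) as [phi [ip [N HN]]].
  set (B := g (phi N)) in *.
  assert (Aphi : mconv (fun k => cj (Pm z0 (s (phi k))) (g (phi k))) A).
  { apply (mconv_subseq (fun k => cj (Pm z0 (s k)) (g k)) A phi); auto. apply inc_ge; auto. }
  assert (PS : forall k, SL2 (Pm z0 (s k))) by (intro k; apply Pm_SL2; pose proof (Hs k); lra).
  destruct (classic (psl_is_id B)) as [HB|HB].
  - apply (pm_limit _ A mid N Aphi). intros k Hk.
    destruct (HN k Hk) as [e|e]; rewrite e; destruct HB as [e'|e']; rewrite e';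
      rewrite ?cj_mneg, cj_mid, ?mneg_mneg; auto.
  - exfalso. apply HnL. apply (FIX G z0 B); auto.
    + apply HGg.
    + assert (HS : SL2 B) by (destruct HG as [[HS _] _]; apply HS; apply HGg).
      set (a := ma B). set (b := mb B). set (c := mc B). set (d := md B).
      set (KB := Cmod a + 2 * Cmod c * Z + Cmod d).
      assert (Hbd : forall k, (N <= k)%nat -> Cmod (FF B z0) <= s (phi k) * (KA + Z * KB)).
      { intros k Hk. set (t := s (phi k)). assert (Ht : 0 < t <= 1) by apply Hs.
        destruct (Pm_entries z0 t B) as [_ [_ [_ E4]]]. lra. cbv zeta in E4.
        set (v := vz z0 t) in *.
        set (f := Cminus (Cminus (Cplus (Cmult a v) b) (Cmult (Cmult c v) v)) (Cmult d v)).
        assert (Hf : Cmod f <= KA * t).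
        { assert (Cmod (mb (cj (Pm z0 t) (g (phi k)))) <= KA).
          { eapply Rle_trans. apply Cmod_le_mnorm_b. apply HKA. }
          assert (Cmod (Cmult (mb (cj (Pm z0 t) B)) (Cmult (RtoC t) (RtoC t))) = Cmod f).
          { unfold f, a, b, c, d. rewrite E4. auto. }
          assert (Cmod (mb (cj (Pm z0 t) B)) <= KA).
          { destruct (HN k Hk) as [e|e]; rewrite e in H. auto. rewrite cj_mneg in H.
            simpl in H. rewrite Cmod_opp in H. auto. }
          rewrite <- H0. rewrite !Cmod_mult, Cmod_R, Rabs_pos_eq by lra.
          pose proof (Cmod_ge_0 (mb (cj (Pm z0 t) B))).
          assert (t * t <= t) by nra. assert (0 <= t * t) by nra.
          pose proof (Rmult_le_compat _ _ _ _ H2 H4 H1 H3). lra. }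
        assert (Ediff : Cminus f (FF B z0) = Cmult (Cminus v z0) (Cminus (Cminus a (Cmult c (Cplus v z0))) d)).
        { unfold f, FF, a, b, c, d. ring. }
        assert (Hv : Cmod v <= Z) by (apply vz_bound; auto).
        assert (H2 : Cmod (Cminus (Cminus a (Cmult c (Cplus v z0))) d) <= KB).
        { unfold Cminus. eapply Rle_trans. apply Cmod_triangle. rewrite Cmod_opp.
          pose proof (Cmod_triangle a (Copp (Cmult c (Cplus v z0)))). rewrite Cmod_opp, Cmod_mult in H.
          pose proof (Cmod_triangle v z0). pose proof (Cmod_ge_0 c).
          assert (Cmod c * Cmod (Cplus v z0) <= Cmod c * (2 * Z)).
          { apply Rmult_le_compat_l; auto. unfold Z in *. lra. }
          unfold KB. lra. }
        replace (FF B z0) with (Cminus f (Cminus f (FF B z0))) by ring.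
        unfold Cminus at 1. eapply Rle_trans. apply Cmod_triangle. rewrite Cmod_opp, Ediff, Cmod_mult.
        unfold v. rewrite vz_diff by lra. fold Z. fold t.
        pose proof (Cmod_ge_0 (Cminus (Cminus a (Cmult c (Cplus v z0))) d)).
        assert (t * Z * Cmod (Cminus (Cminus a (Cmult c (Cplus (vz z0 t) z0))) d) <= t * (Z * KB)).
        { rewrite Rmult_assoc. apply Rmult_le_compat_l. lra. apply Rmult_le_compat_l; auto. }
        fold v. pose proof (Rplus_le_compat _ _ _ _ Hf H0) as HH. replace (t * (KA + Z * KB)) with (KA * t + t * (Z * KB)) by ring. exact HH. }
      apply Cmod_eq_0. pose proof (Cmod_ge_0 (FF B z0)).
      destruct H as [Hp|]; auto. exfalso.
      assert (HK2 : 0 < KA + Z * KB + 1).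
      { unfold KB. pose proof (Cmod_ge_0 a). pose proof (Cmod_ge_0 c). pose proof (Cmod_ge_0 d). nra. }
      destruct (Hcs (Cmod (FF B z0) / (KA + Z * KB + 1))) as [N2 HN2].
      { apply Rdiv_lt_0_compat; auto. }
      set (k := max N N2).
      specialize (HN2 (phi k)). assert (N2 <= phi k)%nat by (pose proof (inc_ge phi ip k); unfold k in *; lia).
      specialize (HN2 H). specialize (Hbd k ltac:(unfold k; lia)).
      pose proof (Hs (phi k)). rewrite Rabs_pos_eq in HN2 by lra.
      assert (0 <= KA + Z * KB).
      { unfold KB. pose proof (Cmod_ge_0 a). pose proof (Cmod_ge_0 c). pose proof (Cmod_ge_0 d). nra. }
      assert (s (phi k) * (KA + Z * KB + 1) < Cmod (FF B z0)).
      { apply Rmult_lt_reg_r with (/ (KA + Z * KB + 1)). apply Rinv_0_lt_compat; auto.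
        rewrite Rmult_assoc, Rinv_r by lra. unfold Rdiv in HN2. lra. }
      nra.
Qed.

Lemma ML G z0 s g A :
  kleinian G -> ~ limit_set G (Some z0) -> (forall k, 0 < s k <= 1) -> cz s -> (forall k, G (g k)) ->
  mconv (fun k => cj (Pm z0 (s k)) (g k)) A -> psl_is_id A.
Proof. intros HG HnL Hs Hcs HGg HA.
  destruct (classic (exists M, forall k, Cmod (mc (g k)) <= M)) as [[M HM]|Hn].
  - apply (ML_bounded G z0 s g A M); auto.
  - exfalso. apply (ML_unbounded G z0 s g A); auto.
    intros M N. apply NNPP. intro H. apply Hn.
    destruct (fin_bound (fun k => Cmod (mc (g k))) N) as [K0 HK0].
    exists (Rmax M K0). intro k. destruct (Compare_dec.le_lt_dec N k).
    + apply Rle_trans with M. apply Rnot_lt_le. intro. apply H. exists k. auto. apply Rmax_l.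
    + eapply Rle_trans. 2: apply Rmax_r. specialize (HK0 k l). rewrite Rabs_pos_eq in HK0 by apply Cmod_ge_0. auto.
Qed.

Lemma lim_cz u (s : R) : is_lim_seq u s -> cz (fun n => u n - s).
Proof. rewrite <- is_lim_seq_spec. intros H eps He. unfold is_lim_seq' in H. destruct (H (mkposreal eps He)) as [N HN].
  exists N. intros. apply HN. auto. Qed.

Lemma Cmod_RtoC_diff a b : Cmod (Cminus (RtoC a) (RtoC b)) = Rabs (a - b).
Proof. rewrite <- RtoC_minus. apply Cmod_R. Qed.

Lemma Pm_diff z0 a b : a <> 0 -> b <> 0 ->
  mnorm (msub (Pm z0 a) (Pm z0 b)) = Rabs (/ a - / b) * (1 + Cmod z0) + Rabs (a - b).
Proof. intros Ha Hb. unfold mnorm, msub, Pm; cbn [ma mb mc md].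
  rewrite <- !RtoC_inv by auto. rewrite !Cmod_RtoC_diff.
  replace (Cminus (Copp (Cmult (vz z0 a) (RtoC (/ a)))) (Copp (Cmult (vz z0 b) (RtoC (/ b)))))
    with (Cmult (RtoC (/ b - / a)) z0).
  2: { unfold vz. rewrite !RtoC_minus, !RtoC_inv by auto. field. split; apply RtoC_neq0; auto. }
  rewrite Cmod_mult, Cmod_R, Rminus_diag, Rabs_R0. rewrite (Rabs_minus_sym (/ b)). ring. Qed.

Lemma inv_diff a s : 0 < s -> s / 2 <= a -> Rabs (/ a - / s) <= 2 / (s * s) * Rabs (a - s).
Proof. intros Hs Ha. replace (/ a - / s) with ((s - a) / (a * s)) by (field; lra).
  unfold Rdiv. rewrite Rabs_mult, Rabs_Rinv by nra. rewrite Rabs_minus_sym.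
  rewrite (Rabs_pos_eq (a * s)) by nra. rewrite Rmult_comm.
  apply Rmult_le_compat_r. apply Rabs_pos.
  apply Rmult_le_reg_l with (a * s). nra. rewrite Rinv_r by nra.
  replace (a * s * (2 * / (s * s))) with (2 * a / s) by (field; lra).
  apply Rmult_le_reg_l with s. auto. replace (s * (2 * a / s)) with (2 * a) by (field; lra). lra. Qed.

Lemma Pm_cont z0 u s : 0 < s -> cz (fun n => u n - s) -> mconv (fun n => Pm z0 (u n)) (Pm z0 s).
Proof. intros Hs Hu. unfold mconv.
  apply cz_le_ev with (fun n => (2 / (s * s) * (1 + Cmod z0) + 1) * Rabs (u n - s)).
  - destruct (Hu (s / 2) ltac:(lra)) as [N HN]. exists N. intros n Hn. specialize (HN n Hn).
    apply Rabs_def2 in HN. rewrite Rabs_pos_eq by apply mnorm_ge0.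
    rewrite Pm_diff by lra. pose proof (inv_diff (u n) s Hs ltac:(lra)).
    pose proof (Cmod_ge_0 z0). pose proof (Rabs_pos (u n - s)).
    pose proof (Rmult_le_compat_r (1 + Cmod z0) _ _ ltac:(lra) H). nra.
  - apply cz_scal. apply cz_abs_intro. auto. Qed.

Lemma mconv_ev X Y L : (exists N, forall n, (N <= n)%nat -> X n = Y n) -> mconv Y L -> mconv X L.
Proof. intros [N HN] HY. unfold mconv. apply cz_le_ev with (fun n => mnorm (msub (Y n) L)).
  - exists N. intros n Hn. rewrite HN by auto. rewrite Rabs_pos_eq by apply mnorm_ge0. lra.
  - apply cz_abs_intro in HY. eapply cz_le. 2: apply HY. intro n. rewrite !Rabs_pos_eq by (try apply Rabs_pos; apply mnorm_ge0). lra.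
Qed.

Definition gam (G : M2 -> Prop) (z0 : C) (s : R) (A : M2) : Prop :=
  (s <= 0 /\ psl_is_id A) \/ (0 < s /\ cg (Pm z0 s) G A).

Lemma gam_neg G z0 s A : kleinian G -> gam G z0 s A -> gam G z0 s (mneg A).
Proof. intros HG [[Hs H]|[Hs [g [Gg ->]]]].
  - left. split; auto. destruct H as [->| ->]; unfold psl_is_id; rewrite ?mneg_mneg; auto.
  - right. split; auto. exists (mneg g). split. destruct HG as [[_ [_ [_ [_ Hn]]]] _]; auto.
    rewrite cj_mneg. auto. Qed.

Lemma gam_mid G z0 s : kleinian G -> gam G z0 s mid.
Proof. intros HG. destruct (Rle_dec s 0).
  - left. split; auto. left; auto.
  - right. split. lra. exists mid. split. destruct HG as [[_ [Hid _]] _]; auto.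
    rewrite cj_mid; auto. apply Pm_SL2; lra. Qed.

Lemma kleinian_ext G1 G2 : (forall A, G1 A <-> G2 A) -> kleinian G1 -> kleinian G2.
Proof. intros H HG. assert (E : G1 = G2).
  { apply FunctionalExtensionality.functional_extensionality. intro A.
    apply PropExtensionality.propositional_extensionality. auto. }
  subst. auto. Qed.

Lemma Pm_one z0 : Pm z0 1 = mid.
Proof. unfold Pm, vz, mid. replace (1 - 1) with 0 by ring. rewrite <- RtoC_inv by lra. rewrite Rinv_1.
  f_equal; ring. Qed.

Lemma cont_pos G z0 s u : kleinian G -> 0 < s -> (forall n, 0 <= u n <= 1) -> is_lim_seq u s ->
  geom_conv (fun n => gam G z0 (u n)) (gam G z0 s).
Proof. intros HG Hs Hu Hl. apply lim_cz in Hl. split.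
  - intros phi psi A Hphi Hpsi Hc.
    destruct (psl_conv_fix psi A Hc) as [psi' [Hpm Hc']].
    assert (Hin : forall k, gam G z0 (u (phi k)) (psi' k)).
    { intro k. destruct (Hpm k) as [->| ->]; auto. apply gam_neg; auto. }
    assert (Hl' : cz (fun k => u (phi k) - s)).
    { apply (cz_subseq (fun n => u n - s) phi); auto. apply inc_ge. exact Hphi. }
    destruct (Hl' (s / 2) ltac:(lra)) as [N HN].
    assert (ch : forall k, exists h, G h /\ (0 < u (phi k) -> psi' k = cj (Pm z0 (u (phi k))) h)).
    { intro k. destruct (Hin k) as [[h1 h2]|[h1 [h [Gh E]]]].
      - exists mid. split. destruct HG as [[_ [Hid _]] _]; auto. intro; lra.
      - exists h. auto. }
    set (hh := fun k => proj1_sig (constructive_indefinite_description _ (ch k))).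
    assert (Hhh : forall k, G (hh k) /\ (0 < u (phi k) -> psi' k = cj (Pm z0 (u (phi k))) (hh k))).
    { intro k. unfold hh. destruct constructive_indefinite_description. auto. }
    assert (HP : mconv (fun k => Pm z0 (u (phi k))) (Pm z0 s)) by (apply Pm_cont; auto).
    assert (HY : mconv (fun k => cj (minv (Pm z0 (u (phi k)))) (psi' k)) (cj (minv (Pm z0 s)) A)).
    { unfold cj. apply mconv_mul. apply mconv_mul. apply mconv_minv; auto. auto.
      rewrite !minv_minv. apply (mconv_ev _ (fun k => Pm z0 (u (phi k)))); auto.
      exists O. intros. rewrite minv_minv. auto. }
    assert (Hhc : mconv hh (cj (minv (Pm z0 s)) A)).
    { apply (mconv_ev hh _ _) in HY. exact HY. exists N. intros k Hk.
      specialize (HN k Hk). apply Rabs_def2 in HN. destruct (Hhh k) as [_ E].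
      rewrite E by lra. rewrite cj_inv. auto. apply Pm_SL2. lra. }
    right. split; auto. exists (cj (minv (Pm z0 s)) A). split.
    + apply (CL G hh); auto. intro k; apply Hhh.
    + pose proof (cj_inv (minv (Pm z0 s)) A). rewrite minv_minv in H. symmetry. apply H.
      apply SL2_minv. apply Pm_SL2. lra.
  - intros A [[h1 _]|[_ [g [Gg ->]]]]. lra.
    exists (fun n => if Rlt_dec 0 (u n) then cj (Pm z0 (u n)) g else mid). split.
    + intro n. destruct Rlt_dec.
      * right. split; auto. exists g. auto.
      * apply gam_mid; auto.
    + apply mconv_psl. apply (mconv_ev _ (fun n => cj (Pm z0 (u n)) g)).
      * destruct (Hl (s / 2) ltac:(lra)) as [N HN]. exists N. intros n Hn.
        specialize (HN n Hn). apply Rabs_def2 in HN. destruct Rlt_dec; auto. lra.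
      * unfold cj. apply mconv_mul. apply mconv_mul. apply Pm_cont; auto. apply mconv_const.
        apply mconv_minv. apply Pm_cont; auto.
Qed.

Lemma cont_zero G z0 u : kleinian G -> ~ limit_set G (Some z0) -> (forall n, 0 <= u n <= 1) -> is_lim_seq u 0 ->
  geom_conv (fun n => gam G z0 (u n)) (gam G z0 0).
Proof. intros HG HnL Hu Hl. apply lim_cz in Hl. split.
  - intros phi psi A Hphi Hpsi Hc. left. split. lra.
    destruct (psl_conv_fix psi A Hc) as [psi' [Hpm Hc']].
    assert (Hin : forall k, gam G z0 (u (phi k)) (psi' k)).
    { intro k. destruct (Hpm k) as [->| ->]; auto. apply gam_neg; auto. }
    assert (ch : forall k, exists p : R * M2, (0 < fst p <= 1 /\ fst p <= u (phi k) + / (INR k + 1)) /\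
                   G (snd p) /\ psi' k = cj (Pm z0 (fst p)) (snd p)).
    { intro k. pose proof (pos_INR k).
      assert (0 < / (INR k + 1)) by (apply Rinv_0_lt_compat; lra).
      assert (/ (INR k + 1) <= 1) by (rewrite <- Rinv_1; apply Rinv_le_contravar; lra).
      destruct (Hin k) as [[h1 h2]|[h1 [h [Gh E]]]].
      - exists (/ (INR k + 1), psi' k). cbn [fst snd]. split. specialize (Hu (phi k)). lra. split.
        + destruct HG as [[_ [Hid [_ [_ Hn]]]] _]. destruct h2 as [->| ->]; auto.
        + destruct h2 as [->| ->]. rewrite cj_mid; auto. apply Pm_SL2; lra.
          rewrite cj_mneg, cj_mid; auto. apply Pm_SL2; lra.
      - exists (u (phi k), h). cbn [fst snd]. specialize (Hu (phi k)). split. lra. auto. }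
    set (pp := fun k => proj1_sig (constructive_indefinite_description _ (ch k))).
    assert (Hpp : forall k, (0 < fst (pp k) <= 1 /\ fst (pp k) <= u (phi k) + / (INR k + 1)) /\
                   G (snd (pp k)) /\ psi' k = cj (Pm z0 (fst (pp k))) (snd (pp k))).
    { intro k. unfold pp. destruct constructive_indefinite_description. auto. }
    apply (ML G z0 (fun k => fst (pp k)) (fun k => snd (pp k)) A); auto.
    + intro k. apply Hpp.
    + apply cz_le with (fun k => Rabs (u (phi k) - 0) + / (INR k + 1)).
      * intro k. destruct (Hpp k) as [[h1 h2] _]. rewrite Rabs_pos_eq by lra.
        rewrite Rminus_0_r. pose proof (Rle_abs (u (phi k))). lra.
      * apply cz_plus. apply cz_abs_intro. apply (cz_subseq (fun n => u n - 0) phi); auto.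
        apply inc_ge. exact Hphi.
        intros eps He. destruct (small_inv eps He) as [N HN]. exists N. intros.
        rewrite Rabs_pos_eq. auto. left; apply Rinv_0_lt_compat; pose proof (pos_INR n); lra.
    + intro k. apply Hpp.
    + apply (mconv_ev _ psi'); auto. exists O. intros k _. symmetry. apply Hpp.
  - intros A [[_ HA]|[h _]]; [|lra]. exists (fun _ => mid). split.
    + intro n. apply gam_mid; auto.
    + unfold psl_conv. apply (is_lim_seq_ext (fun _ => 0)). intro n. symmetry. apply psl_dist_pm.
      destruct HA as [->| ->]. auto. right. rewrite mneg_mneg. auto. apply is_lim_seq_const.
Qed.

Lemma omega_finite G : domain_nonempty G -> exists z0, ~ limit_set G (Some z0).
Proof. intros [xi Hxi]. destruct xi as [z0|]. eauto.
  apply NNPP. intro H. apply Hxi.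
  assert (Hall : forall z, limit_set G (Some z)).
  { intro z. apply NNPP. intro H'. apply H. eauto. }
  assert (ch : forall n : nat, exists h, G h /\ INR n < Cmod (fst (act h Opt))).
  { intro n. destruct (Hall (RtoC (INR n + 1))) as [g [Gg [Hc _]]].
    apply lim_cz in Hc. destruct (Hc 1 ltac:(lra)) as [N HN]. specialize (HN N (le_n N)).
    exists (g N). split; auto. rewrite Rminus_0_r, Rabs_pos_eq in HN by apply Cmod_ge_0.
    pose proof (Cmod_triangle (Copp (Cminus (fst (act (g N) Opt)) (RtoC (INR n + 1)))) (fst (act (g N) Opt))).
    replace (Cplus (Copp (Cminus (fst (act (g N) Opt)) (RtoC (INR n + 1)))) (fst (act (g N) Opt)))
      with (RtoC (INR n + 1)) in H0 by ring.
    rewrite Cmod_opp, Cmod_R, Rabs_pos_eq in H0 by (pose proof (pos_INR n); lra). lra. }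
  set (hh := fun n => proj1_sig (constructive_indefinite_description _ (ch n))).
  assert (Hhh : forall n, G (hh n) /\ INR n < Cmod (fst (act (hh n) Opt))).
  { intro n. unfold hh. destruct constructive_indefinite_description. auto. }
  exists hh. split. intro; apply Hhh. unfold conv_to_boundary; cbv beta iota.
  apply (is_lim_seq_le_p_loc INR). 2: apply is_lim_seq_INR.
  exists 1%nat. intros n Hn. destruct (Hhh n) as [_ H1]. apply le_INR in Hn. simpl in Hn.
  pose proof (pow2_ge_0 (snd (act (hh n) Opt))).
  assert (Cmod (fst (act (hh n) Opt)) <= Cmod (fst (act (hh n) Opt)) ^ 2) by (set (x := Cmod (fst (act (hh n) Opt))) in *; assert (1 <= x) by lra; replace (x ^ 2) with (x * x) by ring; nra).
  lra.
Qed.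

Theorem mainTheorem6 : forall G : M2 -> Prop,
  kleinian G -> domain_nonempty G -> in_trivial_path_component G.
Proof.
  intros G HG Hd. destruct (omega_finite G Hd) as [z0 Hz0].
  exists (gam G z0). split; [|split; [|split]].
  - intros s Hs. destruct (Rle_dec s 0).
    + apply (kleinian_ext trivial_group). intro A. unfold gam, trivial_group. split.
      * intro; left; auto.
      * intros [[_ H]|[h _]]; auto. lra.
      * apply trivial_kleinian.
    + apply (kleinian_ext (cg (Pm z0 s) G)). intro A. unfold gam. split.
      * intro; right; split; auto; lra.
      * intros [[h _]|[_ H]]; auto. lra.
      * apply conj_kleinian; auto. apply Pm_SL2; lra.
  - intro A. unfold gam, trivial_group. split.
    + intros [[_ H]|[h _]]; auto. lra.
    + intro; left; split; auto; lra.
  - intro A. unfold gam. split.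
    + intros [[h _]|[_ [g [Gg ->]]]]. lra. rewrite Pm_one. unfold cj.
      rewrite minv_mid, mmul_mid_l, mmul_mid_r. auto.
    + intro HA. right. split. lra. exists A. split; auto. rewrite Pm_one. unfold cj.
      rewrite minv_mid, mmul_mid_l, mmul_mid_r. auto.
  - intros s u Hs Hu Hl. destruct (Rle_lt_or_eq_dec 0 s (proj1 Hs)) as [h|h].
    + apply cont_pos; auto.
    + subst s. apply cont_zero; auto.
Qed.
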